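(* For each $d\in\{\delta,\delta^*,\partial\}$, the logic $\mathbf{DL}(d)$ can simulate $\mathbf{DL}(\partial^* )$ with respect to addition of facts. Explicitly, for every defeasible theory $D$ there is a defeasible theory $D'$ with the following property. For every theory $A=(F_A,\emptyset,\emptyset)$ consisting only of facts that is modular with respect to $D$ and $D'$, and for every literal $q\in\Sigma(D+A)$: - $D+A\vdash+\partial^*q$ iff $D'+A\vdash +d\,q$, and - $D+A\vdash-\partial^*q$ iff $D'+A\vdash -d\,q$.
   Context: Defeasible theories. Literals come from a language closed under negation. For a literal $q$, its complement ${\sim}q$ is $\neg p$ if $q=p$ is a proposition, and $p$ if $q=\neg p$. A defeasible theory $D=(F,R,>)$ consists of: - a set $F$ of literals (the facts); - a finite set $R$ of rules, each with a distinct label; - an acyclic binary relation $>$ on labels (the superiority relation). Each rule $r$ has a finite set $A(r)$ of body literals and a head literal. A rule is one of: - strict, written $A(r)\rightarrow q$; - defeasible, written $A(r)\Rightarrow q$; - a defeater, written $A(r)\leadsto q$. Notation: $R_s$ is the set of strict rules, $R_{sd}$ the set of strict or defeasible rules, and $R[q]$, $R_s[q]$, $R_{sd}[q]$ are the corresponding sets of rules with head $q$. $\Sigma(D)$ and $\Lambda(D)$ are the literals and the labels occurring in $D$. Conclusions. Conclusions have the form $+d\,q$ or $-d\,q$ for a tag $d\in\{\Delta,\partial,\partial^*,\delta,\sigma,\delta^*,\sigma^*\}$. Given $D$, an operator $\mathcal T_D$ maps sets $E$ of conclusions to sets of conclusions. The conclusions of $D$ are $\bigcup_n\mathcal T_D\uparrow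 n$, where $\mathcal T_D\uparrow 0=\emptyset$ and $\mathcal T_D\uparrow(n+1)=\mathcal T_D(\mathcal T_D\uparrow n)$. We write $D\vdash\alpha$ when $\alpha$ is a conclusion of $D$. For a set $B$ of literals, ''$+dB\subseteq E$'' means $+d\,a\in E$ for all $a\in B$. The operator $\mathcal T_D$ is defined by the following clauses. $+\Delta q\in\mathcal T_D(E)$ iff $q\in F$, or there is $r\in R_s[q]$ with $+\Delta A(r)\subseteq E$. $-\Delta q\in\mathcal T_D(E)$ iff $q\notin F$ and every $r\in R_s[q]$ has some $a\in A(r)$ with $-\Delta a\in E$. $+\partial q\in\mathcal T_D(E)$ iff either $+\Delta q\in E$, or all of the following hold: - some $r\in R_{sd}[q]$ has $+\partial A(r)\subseteq E$; - $-\Delta{\sim}q\in E$; - every $s\in R[{\sim}q]$ either has some $a\in A(s)$ with $-\partial a\in E$, or there is $t\in R_{sd}[q]$ with $+\partial A(t)\subseteq E$ and $t>s$. $-\partial q\in\mathcal T_D(E)$ iff $-\Delta q\in E$ and one of the following holds: - every $r\in R_{sd}[q]$ has some $a\in A(r)$ with $-\partial a\in E$; - $+\Delta{\sim}q\in E$; - some $s\in R[{\sim}q]$ has $+\partial A(s)\subseteq E$ and every $t\in R_{sd}[q]$ either has some $a\in A(t)$ with $-\partial a\in E$ or satisfies not $t>s$. $+\partial^*q\in\mathcal T_D(E)$ iff either $+\Delta q\in E$, or there is $r\in R_{sd}[q]$ such that: - $+\partial^*A(r)\subseteq E$; - $-\Delta{\sim}q\in E$; - every $s\in R[{\sim}q]$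 either has some $a\in A(s)$ with $-\partial^*a\in E$, or satisfies $r>s$. $-\partial^*q\in\mathcal T_D(E)$ iff $-\Delta q\in E$ and every $r\in R_{sd}[q]$ satisfies one of: - some $a\in A(r)$ has $-\partial^*a\in E$; - $+\Delta{\sim}q\in E$; - some $s\in R[{\sim}q]$ has $+\partial^*A(s)\subseteq E$ and not $r>s$. $\pm\delta$ are defined exactly as $\pm\partial$, with $\partial$ replaced by $\delta$, with two exceptions. In the $+\delta$ clause, the escape for $s$ is ''some $a\in A(s)$ has $-\sigma a\in E$''. In the $-\delta$ clause, the condition on $s$ is ''$+\sigma A(s)\subseteq E$''. $+\sigma q\in\mathcal T_D(E)$ iff either $+\Delta q\in E$, or there is $r\in R_{sd}[q]$ with $+\sigma A(r)\subseteq E$ such that every $s\in R[{\sim}q]$ either has some $a\in A(s)$ with $-\delta a\in E$ or satisfies not $s>r$. $-\sigma q\in\mathcal T_D(E)$ iff $-\Delta q\in E$ and every $r\in R_{sd}[q]$ either has some $a\in A(r)$ with $-\sigma a\in E$, or there is $s\in R[{\sim}q]$ with $+\delta A(s)\subseteq E$ and $s>r$. $\pm\delta^*$ are defined exactly as $\pm\partial^*$, with $\partial^*$ replaced by $\delta^*$, with two exceptions. In the $+\delta^*$ clause, the escape for $s$ is ''some $a\in A(s)$ has $-\sigma^*a\in E$''. In the $-\delta^*$ clause, the condition on $s$ is ''$+\sigma^*A(s)\subseteq E$''. $\pm\sigma^*$ are defined exactly as $\pm\sigma$, with $\sigma,\delta$ replaced by $\sigma^*,\delta^*$ respectively. The logic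 $\mathbf{DL}(d)$, for $d\in\{\partial,\partial^*,\delta,\delta^*\}$, has principal tag $d$. Addition. For theories $D=(F,R,>)$ and $A=(F',R',>')$ with disjoint label sets, define $D+A=(F\cup F',R\cup R',>\cup>')$. Given theories $D_1,D_2$, an addition $A$ is modular if - $\Sigma(A)\cap\Sigma(D_2)\subseteq\Sigma(D_1)$, - $\Lambda(D_1)\cap\Lambda(A)=\emptyset$, and - $\Lambda(D_2)\cap\Lambda(A)=\emptyset$. Simulation. $L_1$ (principal tag $d_1$) can be simulated by $L_2$ (principal tag $d_2$) with respect to addition of facts if every theory $D_1$ has a theory $D_2$ such that, for every modular addition $A$ of the form $(F,\emptyset,\emptyset)$ and every $q\in\Sigma(D_1+A)$: - $D_1+A\vdash\pm d_1q$ in $L_1$ iff $D_2+A\vdash\pm d_2 q$ in $L_2$ (same sign). *)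

(* Defs.v *)
From Stdlib Require Import List Relations.
Import ListNotations.

(* Propositions are indexed by nat (an infinite supply, so that simulating
   theories may use fresh propositions); labels are nats as well. *)
Definition atom := nat.
Definition label := nat.

Inductive literal : Type := Pos (p : atom) | Neg (p : atom).

Definition compl (q : literal) : literal :=
  match q with Pos p => Neg p | Neg p => Pos p end.

Inductive rkind : Type := Strict | Defeasible | Defeater.

Record rule : Type := mkRule {
  rlabel : label;
  rbody : list literal;
  rhead : literal;
  rkindof : rkind }.

(* D = (F, R, >) ; facts, rules (a finite set given as a list), superiority
   relation given by its (finite) list of pairs (t, s) meaning t > s. *)
Record theory : Type := mkTheory {
  facts : list literal;
  rules : list rule;
  sup : list (label * label) }.

Definition sup_rel (D : theory) : relation label := fun t s => In (t, s) (sup D).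
Definition gt (D : theory) (t s : rule) : Prop := sup_rel D (rlabel t) (rlabel s).

Definition wf_theory (D : theory) : Prop :=
  NoDup (map rlabel (rules D)) /\
  (forall l, ~ clos_trans label (sup_rel D) l l).

Definition in_R (D : theory) (q : literal) (r : rule) : Prop :=
  In r (rules D) /\ rhead r = q.
Definition in_Rs (D : theory) (q : literal) (r : rule) : Prop :=
  in_R D q r /\ rkindof r = Strict.
Definition in_Rsd (D : theory) (q : literal) (r : rule) : Prop :=
  in_R D q r /\ (rkindof r = Strict \/ rkindof r = Defeasible).

(* tags: Delta, partial, partial*, delta, sigma, delta*, sigma* *)
Inductive tag : Type :=
  TDelta | TPartial | TPartialStar | TDelta_ | TSigma | TDeltaStar | TSigmaStar.
Inductive sign : Type := Plus | Minus.

Definition conclusion : Type := (sign * tag * literal)%type.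
Definition cset : Type := conclusion -> Prop.

Definition all_plus (E : cset) (d : tag) (B : list literal) : Prop :=
  forall a, In a B -> E (Plus, d, a).
Definition some_minus (E : cset) (d : tag) (B : list literal) : Prop :=
  exists a, In a B /\ E (Minus, d, a).

(* Generic +∂-style clause (d = main tag, esc = tag of the escape for s).
   For ∂: esc = ∂.  For δ: esc = σ. *)
Definition plus_amb (d esc : tag) (D : theory) (E : cset) (q : literal) : Prop :=
  E (Plus, TDelta, q) \/
  ((exists r, in_Rsd D q r /\ all_plus E d (rbody r)) /\
   E (Minus, TDelta, compl q) /\
   (forall s, in_R D (compl q) s ->
      some_minus E esc (rbody s) \/
      exists t, in_Rsd D q t /\ all_plus E d (rbody t) /\ gt D t s)).

Definition minus_amb (d cond : tag) (D : theory) (E : cset) (q : literal) : Prop :=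
  E (Minus, TDelta, q) /\
  ((forall r, in_Rsd D q r -> some_minus E d (rbody r)) \/
   E (Plus, TDelta, compl q) \/
   (exists s, in_R D (compl q) s /\ all_plus E cond (rbody s) /\
      forall t, in_Rsd D q t -> some_minus E d (rbody t) \/ ~ gt D t s)).

Definition plus_star (d esc : tag) (D : theory) (E : cset) (q : literal) : Prop :=
  E (Plus, TDelta, q) \/
  exists r, in_Rsd D q r /\ all_plus E d (rbody r) /\
    E (Minus, TDelta, compl q) /\
    (forall s, in_R D (compl q) s -> some_minus E esc (rbody s) \/ gt D r s).

Definition minus_star (d cond : tag) (D : theory) (E : cset) (q : literal) : Prop :=
  E (Minus, TDelta, q) /\
  forall r, in_Rsd D q r ->
    some_minus E d (rbody r) \/
    E (Plus, TDelta, compl q) \/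
    exists s, in_R D (compl q) s /\ all_plus E cond (rbody s) /\ ~ gt D r s.

Definition plus_sig (s dl : tag) (D : theory) (E : cset) (q : literal) : Prop :=
  E (Plus, TDelta, q) \/
  exists r, in_Rsd D q r /\ all_plus E s (rbody r) /\
    forall s', in_R D (compl q) s' -> some_minus E dl (rbody s') \/ ~ gt D s' r.

Definition minus_sig (s dl : tag) (D : theory) (E : cset) (q : literal) : Prop :=
  E (Minus, TDelta, q) /\
  forall r, in_Rsd D q r ->
    some_minus E s (rbody r) \/
    exists s', in_R D (compl q) s' /\ all_plus E dl (rbody s') /\ gt D s' r.

Definition T (D : theory) (E : cset) (c : conclusion) : Prop :=
  match c with
  | (Plus, TDelta, q) =>
      In q (facts D) \/ exists r, in_Rs D q r /\ all_plus E TDelta (rbody r)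
  | (Minus, TDelta, q) =>
      ~ In q (facts D) /\ forall r, in_Rs D q r -> some_minus E TDelta (rbody r)
  | (Plus, TPartial, q) => plus_amb TPartial TPartial D E q
  | (Minus, TPartial, q) => minus_amb TPartial TPartial D E q
  | (Plus, TPartialStar, q) => plus_star TPartialStar TPartialStar D E q
  | (Minus, TPartialStar, q) => minus_star TPartialStar TPartialStar D E q
  | (Plus, TDelta_, q) => plus_amb TDelta_ TSigma D E q
  | (Minus, TDelta_, q) => minus_amb TDelta_ TSigma D E q
  | (Plus, TSigma, q) => plus_sig TSigma TDelta_ D E q
  | (Minus, TSigma, q) => minus_sig TSigma TDelta_ D E q
  | (Plus, TDeltaStar, q) => plus_star TDeltaStar TSigmaStar D E q
  | (Minus, TDeltaStar, q) => minus_star TDeltaStar TSigmaStar D E q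
  | (Plus, TSigmaStar, q) => plus_sig TSigmaStar TDeltaStar D E q
  | (Minus, TSigmaStar, q) => minus_sig TSigmaStar TDeltaStar D E q
  end.

Fixpoint iterT (D : theory) (n : nat) : cset :=
  match n with
  | 0 => fun _ => False
  | S n' => T D (iterT D n')
  end.

Definition derives (D : theory) (c : conclusion) : Prop := exists n, iterT D n c.

Definition in_Sigma (D : theory) (q : literal) : Prop :=
  In q (facts D) \/
  exists r, In r (rules D) /\ (rhead r = q \/ In q (rbody r)).

Definition in_Lambda (D : theory) (l : label) : Prop :=
  (exists r, In r (rules D) /\ rlabel r = l) \/
  (exists l', In (l, l') (sup D) \/ In (l', l) (sup D)).

Definition add (D A : theory) : theory :=
  mkTheory (facts D ++ facts A) (rules D ++ rules A) (sup D ++ sup A).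

Definition modular (D1 D2 A : theory) : Prop :=
  (forall q, in_Sigma A q -> in_Sigma D2 q -> in_Sigma D1 q) /\
  (forall l, ~ (in_Lambda D1 l /\ in_Lambda A l)) /\
  (forall l, ~ (in_Lambda D2 l /\ in_Lambda A l)).

Definition fact_theory (F : list literal) : theory := mkTheory F [] [].

(* Main.v *)
Require Import Defs.
From Stdlib Require Import List Relations Lia Arith Classical Cantor.
Import ListNotations.

Lemma all_plus_mono (E E' : cset) d B : (forall c, E c -> E' c) -> all_plus E d B -> all_plus E' d B.
Proof. unfold all_plus; firstorder. Qed.
Lemma some_minus_mono (E E' : cset) d B : (forall c, E c -> E' c) -> some_minus E d B -> some_minus E' d B.
Proof. unfold some_minus; firstorder. Qed.
Ltac mono_tac H :=
  repeat match goal with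
  | h : _ \/ _ |- _ => destruct h
  | h : _ /\ _ |- _ => destruct h
  | h : exists _, _ |- _ => destruct h
  | |- _ /\ _ => split
  | |- forall _, _ => intro
  | h : forall _, _ -> _ \/ _ |- _ => fail
  end.
Lemma plus_amb_mono d e Th (E E' : cset) q : (forall c, E c -> E' c) -> plus_amb d e Th E q -> plus_amb d e Th E' q.
Proof. intros H [h|[[r [h1 h2]] [h3 h4]]]; [left; auto|right]. split;[|split].
 exists r; split; eauto using all_plus_mono. auto.
 intros s hs. destruct (h4 s hs) as [h|[t [? [? ?]]]]; [left; eauto using some_minus_mono|right; exists t; eauto using all_plus_mono]. Qed.
Lemma minus_amb_mono d e Th (E E' : cset) q : (forall c, E c -> E' c) -> minus_amb d e Th E q -> minus_amb d e Th E' q.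
Proof. intros H [h0 [h|[h|[s [h1 [h2 h3]]]]]]; split; auto.
 left; intros r hr; eauto using some_minus_mono. 
 right; right; exists s; split; [auto|split;[eauto using all_plus_mono|]]. intros t ht. destruct (h3 t ht); [left; eauto using some_minus_mono| right; auto]. Qed.
Lemma plus_star_mono d e Th (E E' : cset) q : (forall c, E c -> E' c) -> plus_star d e Th E q -> plus_star d e Th E' q.
Proof. intros H [h|[r [h1 [h2 [h3 h4]]]]]; [left; auto|right]. exists r; split;[auto|split;[eauto using all_plus_mono|split;[auto|]]].
 intros s hs. destruct (h4 s hs); [left; eauto using some_minus_mono|right; auto]. Qed.
Lemma minus_star_mono d e Th (E E' : cset) q : (forall c, E c -> E' c) -> minus_star d e Th E q -> minus_star d e Th E' q.
Proof. intros H [h0 h]; split; auto. intros r hr. destruct (h r hr) as [h1|[h1|[s [h1 [h2 h3]]]]].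
 left; eauto using some_minus_mono. right; left; auto. right; right; exists s; eauto using all_plus_mono. Qed.
Lemma plus_sig_mono d e Th (E E' : cset) q : (forall c, E c -> E' c) -> plus_sig d e Th E q -> plus_sig d e Th E' q.
Proof. intros H [h|[r [h1 [h2 h4]]]]; [left; auto|right]. exists r; split;[auto|split;[eauto using all_plus_mono|]].
 intros s hs. destruct (h4 s hs); [left; eauto using some_minus_mono|right; auto]. Qed.
Lemma minus_sig_mono d e Th (E E' : cset) q : (forall c, E c -> E' c) -> minus_sig d e Th E q -> minus_sig d e Th E' q.
Proof. intros H [h0 h]; split; auto. intros r hr. destruct (h r hr) as [h1|[s [h1 [h2 h3]]]].
 left; eauto using some_minus_mono. right; exists s; eauto using all_plus_mono. Qed.
Lemma T_mono Th (E E' : cset) c : (forall c, E c -> E' c) -> T Th E c -> T Th E' c.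
Proof.
  intros H. destruct c as [[[] []] q]; simpl;
  eauto using plus_amb_mono, minus_amb_mono, plus_star_mono, minus_star_mono, plus_sig_mono, minus_sig_mono.
  - intros [h|[r [h1 h2]]]; [left; auto| right; exists r; eauto using all_plus_mono].
  - intros [h1 h2]; split; auto. intros r hr; eauto using some_minus_mono.
Qed.
Lemma mod16 x k : k < 16 -> (16*x+k) mod 16 = k.
Proof. intros. rewrite Nat.add_comm, Nat.mul_comm, Nat.Div0.mod_add. apply Nat.mod_small; auto. Qed.


Lemma iter_S Th n c : iterT Th n c -> iterT Th (S n) c.
Proof. revert c; induction n; simpl; [tauto|]. intros c; apply T_mono; auto. Qed.
Lemma iter_mono Th n m c : n <= m -> iterT Th n c -> iterT Th m c.
Proof. induction 1; auto using iter_S. Qed.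
Lemma iter_sub Th n m : n <= m -> forall c, iterT Th n c -> iterT Th m c.
Proof. intros; eapply iter_mono; eauto. Qed.
Lemma iter_der Th n : forall c, iterT Th n c -> derives Th c.
Proof. intros c h; exists n; auto. Qed.

Definition Mono (P : nat -> Prop) := forall n m, n <= m -> P n -> P m.

Lemma list_fin {A} (l : list A) (P : A -> nat -> Prop) :
  (forall x, Mono (P x)) -> (forall x, In x l -> exists n, P x n) -> exists n, forall x, In x l -> P x n.
Proof.
  intros HM; induction l as [|a l IH]; intros H.
  - exists 0; intros x [].
  - destruct (H a (or_introl eq_refl)) as [n1 h1].
    destruct IH as [n2 h2]; [intros; apply H; right; auto|].
    exists (max n1 n2); intros x [<-|hx].
    + eapply HM; [|eauto]; lia.
    + eapply HM; [|apply h2; auto]; lia.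
Qed.
Lemma fin_and (P Q : nat -> Prop) : Mono P -> Mono Q -> (exists n, P n) -> (exists n, Q n) -> exists n, P n /\ Q n.
Proof. intros HP HQ [a ha] [b hb]; exists (max a b); split; [apply (HP a)|apply (HQ b)]; auto; lia. Qed.

Lemma mono_E Th a : Mono (fun n => iterT Th n a).
Proof. intros n m h; apply iter_mono; auto. Qed.
Lemma mono_ap Th d B : Mono (fun n => all_plus (iterT Th n) d B).
Proof. intros n m h; apply all_plus_mono, iter_sub; auto. Qed.
Lemma mono_sm Th d B : Mono (fun n => some_minus (iterT Th n) d B).
Proof. intros n m h; apply some_minus_mono, iter_sub; auto. Qed.
Lemma mono_or P Q : Mono P -> Mono Q -> Mono (fun n => P n \/ Q n).
Proof. intros a b n m h [x|x]; [left; eapply a|right; eapply b]; eauto. Qed.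
Lemma mono_and P Q : Mono P -> Mono Q -> Mono (fun n => P n /\ Q n).
Proof. intros a b n m h [x y]; split; [eapply a|eapply b]; eauto. Qed.
Lemma mono_const (P : Prop) : Mono (fun _ => P).
Proof. intros n m h x; auto. Qed.
Lemma mono_ex {A} (P : A -> nat -> Prop) : (forall x, Mono (P x)) -> Mono (fun n => exists x, P x n).
Proof. intros a n m h [x y]; exists x; eapply a; eauto. Qed.
Lemma mono_imp (P : Prop) Q : Mono Q -> Mono (fun n => P -> Q n).
Proof. intros a n m h y z; eapply a; eauto. Qed.
Lemma mono_all {A} (P : A -> nat -> Prop) : (forall x, Mono (P x)) -> Mono (fun n => forall x, P x n).
Proof. intros a n m h y z; eapply a; eauto. Qed.

Lemma der_fin Th c : derives Th c -> exists n, iterT Th n c.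
Proof. auto. Qed.
Lemma ap_fin Th d B : all_plus (derives Th) d B -> exists n, all_plus (iterT Th n) d B.
Proof. intros h. apply (list_fin B (fun a n => iterT Th n (Plus, d, a))); [intros; apply mono_E|]. exact h. Qed.
Lemma sm_fin Th d B : some_minus (derives Th) d B -> exists n, some_minus (iterT Th n) d B.
Proof. intros [a [h [n hn]]]; exists n, a; auto. Qed.
Definition lit_eq_dec (a b : literal) : {a = b} + {a <> b}.
Proof. decide equality; apply Nat.eq_dec. Defined.
Lemma rules_fin Th q (P : rule -> nat -> Prop) : (forall x, Mono (P x)) ->
  (forall s, in_R Th q s -> exists n, P s n) -> exists n, forall s, in_R Th q s -> P s n.
Proof.
  intros HM H. destruct (list_fin (rules Th) (fun s n => rhead s = q -> P s n)) as [n hn].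
  - intros; apply mono_imp; auto.
  - intros x hx. destruct (lit_eq_dec (rhead x) q) as [e|e].
    + destruct (H x (conj hx e)) as [n hn]; exists n; auto.
    + exists 0; intros; contradiction.
  - exists n; intros s [h1 h2]; apply hn; auto.
Qed.

Ltac monos := repeat first [ apply mono_or | apply mono_and | apply mono_ap | apply mono_sm | apply mono_const
  | apply mono_E | (apply mono_ex; intro) | (apply mono_all; intro) | (apply mono_imp) ].

Lemma plus_amb_fin d e Th q : plus_amb d e Th (derives Th) q -> exists n, plus_amb d e Th (iterT Th n) q.
Proof.
  intros [h | [[r [h1 h2]] [h3 h4]]].
  - destruct h as [n hn]; exists n; left; auto.
  - destruct (ap_fin _ _ _ h2) as [n1 g1]. destruct h3 as [n2 g2].
    destruct (rules_fin Th (compl q) (fun s n => some_minus (iterT Th n) e (rbody s) \/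
       exists t, in_Rsd Th q t /\ all_plus (iterT Th n) d (rbody t) /\ gt Th t s)) as [n3 g3].
    + intros; monos.
    + intros s hs. destruct (h4 s hs) as [x|[t [x1 [x2 x3]]]].
      * destruct (sm_fin _ _ _ x) as [n hn]; exists n; left; auto.
      * destruct (ap_fin _ _ _ x2) as [n hn]; exists n; right; eauto.
    + exists (n1+n2+n3). right. split; [|split].
      * exists r; split; auto. eapply mono_ap; [|eauto]; lia.
      * eapply mono_E; [|eauto]; lia.
      * intros s hs. assert (M: Mono (fun n => some_minus (iterT Th n) e (rbody s) \/
       exists t, in_Rsd Th q t /\ all_plus (iterT Th n) d (rbody t) /\ gt Th t s)) by monos.
        eapply M; [|apply g3; auto]; lia.
Qed.

Lemma minus_amb_fin d e Th q : minus_amb d e Th (derives Th) q -> exists n, minus_amb d e Th (iterT Th n) q.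
Proof.
  intros [[n0 h0] h].
  assert (exists n, (forall r, in_Rsd Th q r -> some_minus (iterT Th n) d (rbody r)) \/
   iterT Th n (Plus, TDelta, compl q) \/
   (exists s, in_R Th (compl q) s /\ all_plus (iterT Th n) e (rbody s) /\
      forall t, in_Rsd Th q t -> some_minus (iterT Th n) d (rbody t) \/ ~ gt Th t s)) as [n1 h1].
  { destruct h as [h|[h|[s [hs1 [hs2 hs3]]]]].
    - destruct (rules_fin Th q (fun r n => (rkindof r = Strict \/ rkindof r = Defeasible) -> some_minus (iterT Th n) d (rbody r))) as [n hn].
      + intros; monos.
      + intros r hr.
        assert (hk : (rkindof r = Strict \/ rkindof r = Defeasible) \/ ~ (rkindof r = Strict \/ rkindof r = Defeasible)) by (destruct (rkindof r); [left;left|left;right|right]; auto; intros [x|x]; discriminate).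
        destruct hk as [hk|hk].
        * destruct (sm_fin _ _ _ (h r (conj hr hk))) as [n hn]; exists n; auto.
        * exists 0; intros; contradiction.
      + exists n; left; intros r [hr hk]; apply hn; auto.
    - destruct h as [n hn]; exists n; right; left; auto.
    - destruct (ap_fin _ _ _ hs2) as [n1 g1].
      destruct (rules_fin Th q (fun t n => (rkindof t = Strict \/ rkindof t = Defeasible) -> some_minus (iterT Th n) d (rbody t) \/ ~ gt Th t s)) as [n2 g2].
      + intros; monos.
      + intros t ht.
        assert (hk : (rkindof t = Strict \/ rkindof t = Defeasible) \/ ~ (rkindof t = Strict \/ rkindof t = Defeasible)) by (destruct (rkindof t); [left;left|left;right|right]; auto; intros [x|x]; discriminate).
        destruct hk as [hk|hk].
        * destruct (hs3 t (conj ht hk)) as [x|x].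
          -- destruct (sm_fin _ _ _ x) as [n hn]; exists n; auto.
          -- exists 0; auto.
        * exists 0; intros; contradiction.
      + exists (n1+n2); right; right; exists s; split; auto; split.
        * eapply mono_ap; [|eauto]; lia.
        * intros t [ht hk]. assert (M: Mono (fun n => some_minus (iterT Th n) d (rbody t) \/ ~ gt Th t s)) by monos.
          eapply M; [|apply g2; auto]; lia. }
  exists (n0+n1); split.
  - eapply mono_E; [|eauto]; lia.
  - assert (M : Mono (fun n => (forall r, in_Rsd Th q r -> some_minus (iterT Th n) d (rbody r)) \/
   iterT Th n (Plus, TDelta, compl q) \/
   (exists s, in_R Th (compl q) s /\ all_plus (iterT Th n) e (rbody s) /\
      forall t, in_Rsd Th q t -> some_minus (iterT Th n) d (rbody t) \/ ~ gt Th t s))) by monos.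
    eapply M; [|eauto]; lia.
Qed.

Lemma kind_dec r : (rkindof r = Strict \/ rkindof r = Defeasible) \/ ~ (rkindof r = Strict \/ rkindof r = Defeasible).
Proof. destruct (rkindof r); [left;left|left;right|right]; auto; intros [x|x]; discriminate. Qed.

Lemma rsd_fin Th q (P : rule -> nat -> Prop) : (forall x, Mono (P x)) ->
  (forall s, in_Rsd Th q s -> exists n, P s n) -> exists n, forall s, in_Rsd Th q s -> P s n.
Proof.
  intros HM H. destruct (rules_fin Th q (fun s n => (rkindof s = Strict \/ rkindof s = Defeasible) -> P s n)) as [n hn].
  - intros; apply mono_imp; auto.
  - intros x hx. destruct (kind_dec x) as [e|e].
    + destruct (H x (conj hx e)) as [n hn]; exists n; auto.
    + exists 0; intros; contradiction.
  - exists n; intros s [h1 h2]; apply hn; auto.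
Qed.

Lemma plus_star_fin d e Th q : plus_star d e Th (derives Th) q -> exists n, plus_star d e Th (iterT Th n) q.
Proof.
  intros [h | [r [h1 [h2 [h3 h4]]]]].
  - destruct h as [n hn]; exists n; left; auto.
  - destruct (ap_fin _ _ _ h2) as [n1 g1]. destruct h3 as [n2 g2].
    destruct (rules_fin Th (compl q) (fun s n => some_minus (iterT Th n) e (rbody s) \/ gt Th r s)) as [n3 g3].
    + intros; monos.
    + intros s hs. destruct (h4 s hs) as [x|x].
      * destruct (sm_fin _ _ _ x) as [n hn]; exists n; left; auto.
      * exists 0; right; auto.
    + exists (n1+n2+n3). right. exists r; split; [auto|split; [|split]].
      * eapply mono_ap; [|eauto]; lia.
      * eapply mono_E; [|eauto]; lia.
      * intros s hs. assert (M: Mono (fun n => some_minus (iterT Th n) e (rbody s) \/ gt Th r s)) by monos.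
        eapply M; [|apply g3; auto]; lia.
Qed.

Lemma minus_star_fin d e Th q : minus_star d e Th (derives Th) q -> exists n, minus_star d e Th (iterT Th n) q.
Proof.
  intros [[n0 h0] h].
  destruct (rsd_fin Th q (fun r n => some_minus (iterT Th n) d (rbody r) \/
    iterT Th n (Plus, TDelta, compl q) \/
    exists s, in_R Th (compl q) s /\ all_plus (iterT Th n) e (rbody s) /\ ~ gt Th r s)) as [n1 g1].
  - intros; monos.
  - intros r hr. destruct (h r hr) as [x|[[n x]|[s [x1 [x2 x3]]]]].
    + destruct (sm_fin _ _ _ x) as [n hn]; exists n; left; auto.
    + exists n; right; left; auto.
    + destruct (ap_fin _ _ _ x2) as [n hn]; exists n; right; right; eauto.
  - exists (n0+n1); split.
    + eapply mono_E; [|eauto]; lia.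
    + intros r hr. assert (M: Mono (fun n => some_minus (iterT Th n) d (rbody r) \/
    iterT Th n (Plus, TDelta, compl q) \/
    exists s, in_R Th (compl q) s /\ all_plus (iterT Th n) e (rbody s) /\ ~ gt Th r s)) by monos.
      eapply M; [|apply g1; auto]; lia.
Qed.

Lemma plus_sig_fin d e Th q : plus_sig d e Th (derives Th) q -> exists n, plus_sig d e Th (iterT Th n) q.
Proof.
  intros [h | [r [h1 [h2 h4]]]].
  - destruct h as [n hn]; exists n; left; auto.
  - destruct (ap_fin _ _ _ h2) as [n1 g1].
    destruct (rules_fin Th (compl q) (fun s n => some_minus (iterT Th n) e (rbody s) \/ ~ gt Th s r)) as [n3 g3].
    + intros; monos.
    + intros s hs. destruct (h4 s hs) as [x|x].
      * destruct (sm_fin _ _ _ x) as [n hn]; exists n; left; auto.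
      * exists 0; right; auto.
    + exists (n1+n3). right. exists r; split; [auto|split].
      * eapply mono_ap; [|eauto]; lia.
      * intros s hs. assert (M: Mono (fun n => some_minus (iterT Th n) e (rbody s) \/ ~ gt Th s r)) by monos.
        eapply M; [|apply g3; auto]; lia.
Qed.

Lemma minus_sig_fin d e Th q : minus_sig d e Th (derives Th) q -> exists n, minus_sig d e Th (iterT Th n) q.
Proof.
  intros [[n0 h0] h].
  destruct (rsd_fin Th q (fun r n => some_minus (iterT Th n) d (rbody r) \/
    exists s, in_R Th (compl q) s /\ all_plus (iterT Th n) e (rbody s) /\ gt Th s r)) as [n1 g1].
  - intros; monos.
  - intros r hr. destruct (h r hr) as [x|[s [x1 [x2 x3]]]].
    + destruct (sm_fin _ _ _ x) as [n hn]; exists n; left; auto.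
    + destruct (ap_fin _ _ _ x2) as [n hn]; exists n; right; eauto.
  - exists (n0+n1); split.
    + eapply mono_E; [|eauto]; lia.
    + intros r hr. assert (M: Mono (fun n => some_minus (iterT Th n) d (rbody r) \/
    exists s, in_R Th (compl q) s /\ all_plus (iterT Th n) e (rbody s) /\ gt Th s r)) by monos.
      eapply M; [|apply g1; auto]; lia.
Qed.

Lemma T_fin Th c : T Th (derives Th) c -> exists n, T Th (iterT Th n) c.
Proof.
  destruct c as [[[] []] q]; simpl;
  eauto using plus_amb_fin, minus_amb_fin, plus_star_fin, minus_star_fin, plus_sig_fin, minus_sig_fin.
  - intros [h|[r [h1 h2]]]; [exists 0; left; auto|].
    destruct (ap_fin _ _ _ h2) as [n hn]; exists n; right; eauto.
  - intros [h1 h2].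
    destruct (rules_fin Th q (fun r n => rkindof r = Strict -> some_minus (iterT Th n) TDelta (rbody r))) as [n hn].
    + intros; monos.
    + intros r hr. destruct (rkindof r) eqn:e.
      * destruct (sm_fin _ _ _ (h2 r (conj hr e))) as [n hn]; exists n; auto.
      * exists 0; discriminate. * exists 0; discriminate.
    + exists n; split; auto. intros r [hr e]; apply hn; auto.
Qed.

Lemma derives_T Th c : T Th (derives Th) c -> derives Th c.
Proof. intros h; destruct (T_fin _ _ h) as [n hn]; exists (S n); exact hn. Qed.
Lemma derives_iter Th c : derives Th c -> exists n, T Th (iterT Th n) c.
Proof. intros [[|n] h]; [destruct h|exists n; exact h]. Qed.
Lemma derives_unfold Th c : derives Th c -> T Th (derives Th) c.
Proof. intros h; destruct (derives_iter _ _ h) as [n hn]. eapply T_mono; [|eauto]. apply iter_der. Qed.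


Definition tagok d sg := (d = TDelta_ /\ sg = TSigma) \/ (d = TDeltaStar /\ sg = TSigmaStar) \/ (d = TPartial /\ sg = TPartial).
Definition role (d sg u ub : tag) := (u = d /\ ub = sg) \/ (u = sg /\ ub = d).

Definition gate (Th : theory) (x : literal) : Prop :=
 (forall t, in_R Th x t -> rkindof t = Defeasible) /\
 (forall t, in_R Th (compl x) t -> rkindof t = Defeater) /\
 (forall t s, in_R Th x t -> in_R Th (compl x) s -> gt Th s t /\ ~ gt Th t s).

Ltac tagcases Hd Hr := destruct Hd as [[-> ->]|[[-> ->]|[-> ->]]]; destruct Hr as [[-> ->]|[-> ->]]; simpl.

Lemma gate_plus_in Th E x d sg u ub : tagok d sg -> role d sg u ub -> gate Th x ->
  E (Minus, TDelta, compl x) ->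
  (exists t, in_R Th x t /\ all_plus E u (rbody t)) ->
  (forall s, in_R Th (compl x) s -> some_minus E ub (rbody s)) -> T Th E (Plus, u, x).
Proof.
  intros Hd Hr [G1 [G2 G3]] h1 [t [ht h2]] h3.
  assert (htsd : in_Rsd Th x t) by (split; auto; right; auto).
  tagcases Hd Hr; unfold plus_amb, plus_star, plus_sig;
  first [ right; split; [eauto|split; [auto|intros; left; auto]]
        | right; exists t; split; [auto|split; [auto|split;[auto|intros; left; auto]]]
        | right; exists t; split; [auto|split; [auto|intros; left; auto]] ].
Qed.

Lemma gate_plus_out Th E x d sg u ub : tagok d sg -> role d sg u ub -> gate Th x ->
  T Th E (Plus, u, x) -> E (Plus, TDelta, x) \/
  ((exists t, in_R Th x t /\ all_plus E u (rbody t)) /\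
   (forall s, in_R Th (compl x) s -> some_minus E ub (rbody s))).
Proof.
  intros Hd Hr [G1 [G2 G3]].
  tagcases Hd Hr; unfold plus_amb, plus_star, plus_sig;
  (intros [h|h]; [left; auto|right]).
  all: first
   [ destruct h as [[t [[ht _] h1]] [_ h3]]; split; [eauto|];
     intros s hs; destruct (h3 s hs) as [z|[t' [[ht' _] [_ hg]]]]; [auto|exfalso; apply (proj2 (G3 t' s ht' hs)); auto]
   | destruct h as [t [[ht _] [h1 [_ h3]]]]; split; [eauto|];
     intros s hs; destruct (h3 s hs) as [z|hg]; [auto|exfalso; apply (proj2 (G3 t s ht hs)); auto]
   | destruct h as [t [[ht _] [h1 h3]]]; split; [eauto|];
     intros s hs; destruct (h3 s hs) as [z|hg]; [auto|exfalso; apply hg, (proj1 (G3 t s ht hs)); auto] ].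
Qed.

Lemma gate_minus_in Th E x d sg u ub : tagok d sg -> role d sg u ub -> gate Th x ->
  E (Minus, TDelta, x) ->
  ((forall t, in_R Th x t -> some_minus E u (rbody t)) \/
   (exists s, in_R Th (compl x) s /\ all_plus E ub (rbody s))) -> T Th E (Minus, u, x).
Proof.
  intros Hd Hr [G1 [G2 G3]] h0 h.
  tagcases Hd Hr; unfold minus_amb, minus_star, minus_sig; split; auto.
  all: destruct h as [h|[s [hs h]]].
  all: first
   [ solve [left; intros r [hr _]; auto]
   | solve [right; right; exists s; split; [auto|split;[auto|intros t [ht _]; right; apply (proj2 (G3 t s ht hs))]]]
   | solve [intros r [hr _]; left; auto]
   | solve [intros r [hr _]; right; right; exists s; split; [auto|split;[auto|apply (proj2 (G3 r s hr hs))]]]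
   | solve [intros r [hr _]; right; exists s; split; [auto|split;[auto|apply (proj1 (G3 r s hr hs))]]] ].
Qed.

Lemma gate_minus_out Th E x d sg u ub : tagok d sg -> role d sg u ub -> gate Th x ->
  T Th E (Minus, u, x) -> E (Minus, TDelta, x) /\
  ((forall t, in_R Th x t -> some_minus E u (rbody t)) \/ E (Plus, TDelta, compl x) \/
   (exists s, in_R Th (compl x) s /\ all_plus E ub (rbody s))).
Proof.
  intros Hd Hr [G1 [G2 G3]].
  assert (Hsd : forall t, in_R Th x t -> in_Rsd Th x t) by (intros t ht; split; auto; right; auto).
  tagcases Hd Hr; unfold minus_amb, minus_star, minus_sig; intros [h0 h]; split; auto.
  all: first
   [ solve [destruct h as [h|[h|[s [hs [h _]]]]]; [left; intros t ht; apply h, Hsd; auto|right;left;auto|right;right;eauto]]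
   | match goal with |- (forall t, in_R _ _ t -> some_minus ?F ?U _) \/ _ =>
     destruct (classic (forall t, in_R Th x t -> some_minus E U (rbody t))) as [a|a] end; [left; auto|];
     apply not_all_ex_not in a; destruct a as [t a];
     apply imply_to_and in a; destruct a as [ht a];
     destruct (h t (Hsd t ht)) as [z|[z|[s [hs [z _]]]]]; [contradiction|right;left;auto|right;right;eauto]
   | match goal with |- (forall t, in_R _ _ t -> some_minus ?F ?U _) \/ _ =>
     destruct (classic (forall t, in_R Th x t -> some_minus E U (rbody t))) as [a|a] end; [left; auto|];
     apply not_all_ex_not in a; destruct a as [t a];
     apply imply_to_and in a; destruct a as [ht a];
     destruct (h t (Hsd t ht)) as [z|[s [hs [z _]]]]; [contradiction|right;right;eauto] ].
Qed.

Definition blocked Th y := exists k, in_R Th (compl y) k /\ rbody k = [] /\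
  forall t, in_R Th y t -> gt Th k t /\ ~ gt Th t k.

Lemma blocked_plus_out Th E y d sg u ub : tagok d sg -> role d sg u ub -> blocked Th y ->
  T Th E (Plus, u, y) -> E (Plus, TDelta, y).
Proof.
  intros Hd Hr [k [hk [hb hg]]].
  tagcases Hd Hr; unfold plus_amb, plus_star, plus_sig; (intros [h|h]; [auto|exfalso]).
  all: first
   [ solve [destruct h as [_ [_ h3]]; destruct (h3 k hk) as [[z [hz _]]|[t' [[ht' _] [_ hg']]]];
       [rewrite hb in hz; destruct hz|apply (proj2 (hg t' ht')); auto]]
   | solve [destruct h as [t [[ht _] [_ [_ h3]]]]; destruct (h3 k hk) as [[z [hz _]]|hg'];
       [rewrite hb in hz; destruct hz|apply (proj2 (hg t ht)); auto]]
   | solve [destruct h as [t [[ht _] [_ h3]]]; destruct (h3 k hk) as [[z [hz _]]|hg'];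
       [rewrite hb in hz; destruct hz|apply hg', (proj1 (hg t ht))]] ].
Qed.

Lemma blocked_minus_in Th E y d sg u ub : tagok d sg -> role d sg u ub -> blocked Th y ->
  E (Minus, TDelta, y) -> T Th E (Minus, u, y).
Proof.
  intros Hd Hr [k [hk [hb hg]]] h0.
  assert (ap : forall e, all_plus E e (rbody k)) by (intros e z hz; rewrite hb in hz; destruct hz).
  tagcases Hd Hr; unfold minus_amb, minus_star, minus_sig; split; auto.
  all: first
   [ solve [right; right; exists k; split; [auto|split;[auto|intros t [ht _]; right; apply (proj2 (hg t ht))]]]
   | solve [intros r [hr _]; right; right; exists k; split; [auto|split;[auto|apply (proj2 (hg r hr))]]]
   | solve [intros r [hr _]; right; exists k; split; [auto|split;[auto|apply (proj1 (hg r hr))]]] ].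
Qed.

Lemma plus_from_delta Th E y u : u <> TDelta -> E (Plus, TDelta, y) -> T Th E (Plus, u, y).
Proof. intros hu h; destruct u; simpl; try (left; auto); congruence. Qed.
Lemma minus_to_delta Th E y u : u <> TDelta -> T Th E (Minus, u, y) -> E (Minus, TDelta, y).
Proof. intros hu; destruct u; simpl; try (intros [h _]; auto); congruence. Qed.

Definition origshape Th a p k pn X Xn :=
 in_R Th a p /\ rkindof p = Defeasible /\ rbody p = [X] /\
 in_R Th (compl a) k /\ rbody k = [] /\ gt Th p k /\
 in_R Th (compl a) pn /\ rbody pn = [Xn] /\
 (forall t, in_R Th a t -> rkindof t = Strict \/ t = p \/ rkindof t = Defeater) /\
 (forall s, in_R Th (compl a) s -> rkindof s = Strict \/ s = pn \/ s = k) /\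
 (forall t, in_R Th a t -> gt Th t k -> t = p) /\
 (forall s, in_R Th (compl a) s -> rkindof s = Strict -> gt Th p s).

Definition dtag d := d = TDelta_ \/ d = TDeltaStar \/ d = TPartial.

Ltac dcases Hd := destruct Hd as [[-> ->]|[[-> ->]|[-> ->]]]; simpl.

Lemma orig_plus_out Th E a p k pn X Xn d sg : tagok d sg -> origshape Th a p k pn X Xn ->
  T Th E (Plus, d, a) -> E (Plus, TDelta, a) \/ E (Plus, d, X).
Proof.
  intros Hd [hp [hpk [hpb [hk [hkb [hgk [hpn [hpnb [C1 [C2 [C3 C4]]]]]]]]]]].
  dcases Hd; unfold plus_amb, plus_star; (intros [h|h]; [auto|right]).
  all: first
   [ solve [destruct h as [_ [_ h3]]; destruct (h3 k hk) as [[z [hz _]]|[t' [[ht' _] [hb hg']]]];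
       [rewrite hkb in hz; destruct hz| rewrite (C3 t' ht' hg') in hb; rewrite hpb in hb; apply hb; left; auto]]
   | solve [destruct h as [t [[ht _] [hb [_ h3]]]]; destruct (h3 k hk) as [[z [hz _]]|hg'];
       [rewrite hkb in hz; destruct hz| rewrite (C3 t ht hg') in hb; rewrite hpb in hb; apply hb; left; auto]] ].
Qed.

Lemma orig_plus_in Th E a p k pn X Xn d sg : tagok d sg -> origshape Th a p k pn X Xn ->
  E (Plus, d, X) -> E (Minus, TDelta, compl a) -> E (Minus, sg, Xn) -> T Th E (Plus, d, a).
Proof.
  intros Hd [hp [hpk [hpb [hk [hkb [hgk [hpn [hpnb [C1 [C2 [C3 C4]]]]]]]]]]] h1 h2 h3.
  assert (hpsd : in_Rsd Th a p) by (split; auto).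
  assert (ap : all_plus E d (rbody p)) by (rewrite hpb; intros z [<-|[]]; auto).
  assert (sm : some_minus E sg (rbody pn)) by (rewrite hpnb; exists Xn; split; [left|]; auto).
  dcases Hd; unfold plus_amb, plus_star; right.
  - split; [eauto|split;[auto|]]. intros s hs. destruct (C2 s hs) as [e|[ -> | -> ]].
    + right; exists p; split; [|split]; auto.
    + left; auto.
    + right; exists p; split; [|split]; auto.
  - exists p; split; [|split;[|split]]; auto. intros s hs. destruct (C2 s hs) as [e|[ -> | -> ]]; auto.
  - split; [eauto|split;[auto|]]. intros s hs. destruct (C2 s hs) as [e|[ -> | -> ]].
    + right; exists p; split; [|split]; auto.
    + left; auto.
    + right; exists p; split; [|split]; auto.
Qed.

Lemma orig_minus_out Th E a p k pn X Xn d sg : tagok d sg -> origshape Th a p k pn X Xn ->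
  (forall s, in_R Th (compl a) s -> rkindof s = Strict -> s <> pn /\ s <> k) ->
  T Th E (Minus, d, a) -> E (Minus, TDelta, a) /\
   (E (Minus, d, X) \/ E (Plus, TDelta, compl a) \/ E (Plus, sg, Xn)).
Proof.
  intros Hd [hp [hpk [hpb [hk [hkb [hgk [hpn [hpnb [C1 [C2 [C3 C4]]]]]]]]]]] C5.
  assert (hpsd : in_Rsd Th a p) by (split; auto).
  assert (smX : forall e, some_minus E e (rbody p) -> E (Minus, e, X))
    by (intros e [z [hz hz']]; rewrite hpb in hz; destruct hz as [<-|[]]; auto).
  assert (apX : forall e, all_plus E e (rbody pn) -> E (Plus, e, Xn))
    by (intros e hz; apply hz; rewrite hpnb; left; auto).
  dcases Hd; unfold minus_amb, minus_star; intros [h0 h]; split; auto.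
  1,3: destruct h as [h|[h|[s [hs [hb h]]]]];
     [left; apply smX, h; auto| right; left; auto| ];
     destruct (C2 s hs) as [e|[ -> | -> ]];
     [destruct (h p hpsd) as [z|z]; [left; apply smX; auto|exfalso; apply z, C4; auto]
     |right; right; apply apX; auto
     |destruct (h p hpsd) as [z|z]; [left; apply smX; auto|exfalso; apply z; auto]].
  destruct (h p hpsd) as [z|[z|[s [hs [hb z]]]]]; [left; apply smX; auto|right; left; auto|].
  destruct (C2 s hs) as [e|[ -> | -> ]];
     [exfalso; apply z, C4; auto
     |right; right; apply apX; auto
     |exfalso; apply z; auto].
Qed.

Lemma orig_minus_in Th E a p k pn X Xn d sg : tagok d sg -> origshape Th a p k pn X Xn ->
  E (Minus, TDelta, a) -> (E (Minus, d, X) \/ E (Plus, TDelta, compl a)) -> T Th E (Minus, d, a).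
Proof.
  intros Hd [hp [hpk [hpb [hk [hkb [hgk [hpn [hpnb [C1 [C2 [C3 C4]]]]]]]]]]] h0 h.
  assert (smX : forall e, E (Minus, e, X) -> some_minus E e (rbody p))
    by (intros e z; exists X; rewrite hpb; split; [left|]; auto).
  assert (ap : forall e, all_plus E e (rbody k)) by (intros e z hz; rewrite hkb in hz; destruct hz).
  assert (C6 : forall t, in_Rsd Th a t -> t = p \/ ~ gt Th t k).
  { intros t [ht hkd]. destruct (C1 t ht) as [e|[e|e]].
    - right; intros g. rewrite (C3 t ht g) in e. congruence.
    - left; auto.
    - destruct hkd as [z|z]; congruence. }
  dcases Hd; unfold minus_amb, minus_star; split; auto.
  1,3: destruct h as [h|h]; [right; right; exists k; split;[auto|split;[auto|]]; intros t ht;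
       destruct (C6 t ht) as [->|z]; [left; auto|right; auto] | right; left; auto].
  intros r hr. destruct h as [h|h]; [|right; left; auto].
  destruct (C6 r hr) as [->|z]; [left; auto|right; right; exists k; auto].
Qed.


Definition atom_of (a : literal) : atom := match a with Pos p => p | Neg p => p end.
Definition li (a : literal) : nat := match a with Pos p => 2*p | Neg p => 2*p+1 end.
Lemma li_inj a b : li a = li b -> a = b.
Proof. destruct a, b; simpl; intros; f_equal; lia. Qed.
Lemma compl_compl a : compl (compl a) = a.
Proof. destruct a; auto. Qed.
Lemma atom_compl a : atom_of (compl a) = atom_of a.
Proof. destruct a; auto. Qed.

Definition rkind_eq_dec (a b : rkind) : {a = b} + {a <> b}.
Proof. decide equality. Defined.
Definition rule_eq_dec (a b : rule) : {a = b} + {a <> b}.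
Proof. decide equality; try apply rkind_eq_dec; try apply lit_eq_dec; try apply Nat.eq_dec;
  apply list_eq_dec, lit_eq_dec. Defined.

Definition pair_eq_dec (x y : nat * nat) : {x = y} + {x <> y}.
Proof. decide equality; apply Nat.eq_dec. Defined.

Inductive rid : Type :=
 | IS (r : rule) | IDl (a : literal) | IkD (a : literal) | IN (a : literal) | Im (a : literal)
 | IxD (a : literal) | Ip (a : literal) | Ik (a : literal) | Iw (r : rule) | IxW (r : rule)
 | Iv (r s : rule) | IG.
Definition rid_eq_dec (a b : rid) : {a = b} + {a <> b}.
Proof. decide equality; first [apply rule_eq_dec | apply lit_eq_dec]. Defined.

Definition isS (r : rule) : bool := match rkindof r with Strict => true | _ => false end.
Definition isSD (r : rule) : bool := match rkindof r with Defeater => false | _ => true end.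
Definition maxl (l : list nat) := fold_right max 0 l.
Lemma maxl_ge l x : In x l -> x <= maxl l.
Proof. induction l; simpl; [tauto|]. intros [->|h]; [lia|specialize (IHl h); lia]. Qed.

Section Constr.
Variable D : theory.

Definition allatoms := map atom_of (facts D) ++
   flat_map (fun r => atom_of (rhead r) :: map atom_of (rbody r)) (rules D).
Definition M := S (maxl allatoms).

Lemma fact_lt a : In a (facts D) -> atom_of a < M.
Proof. intros h; unfold M; assert (In (atom_of a) allatoms); [|apply maxl_ge in H; lia].
  unfold allatoms; apply in_or_app; left; apply in_map; auto. Qed.
Lemma head_lt r : In r (rules D) -> atom_of (rhead r) < M.
Proof. intros h; unfold M; assert (In (atom_of (rhead r)) allatoms); [|apply maxl_ge in H; lia].
  unfold allatoms; apply in_or_app; right; apply in_flat_map; exists r; split; [auto|left; auto]. Qed.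
Lemma body_lt r a : In r (rules D) -> In a (rbody r) -> atom_of a < M.
Proof. intros h h'; unfold M; assert (In (atom_of a) allatoms); [|apply maxl_ge in H; lia].
  unfold allatoms; apply in_or_app; right; apply in_flat_map; exists r; split; [auto|right; apply in_map; auto]. Qed.
Lemma sigma_lt a : in_Sigma D a -> atom_of a < M.
Proof. intros [h|[r [hr [<-|h]]]]; eauto using fact_lt, head_lt, body_lt. Qed.

Definition lits := flat_map (fun p => [Pos p; Neg p]) (seq 0 M).
Lemma in_lits a : In a lits <-> atom_of a < M.
Proof. unfold lits; rewrite in_flat_map; split.
  - intros [p [hp ha]]; apply in_seq in hp. destruct ha as [<-|[<-|[]]]; simpl; lia.
  - intros h; exists (atom_of a); split; [apply in_seq; lia|]. destruct a; simpl; auto. Qed.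

Definition fr k i := M + 8*i + k.
Definition Dl a := Pos (fr 0 (li a)).
Definition Nl a := Pos (fr 1 (li a)).
Definition Xl a := Pos (fr 2 (li a)).
Definition Wl (r : rule) := Pos (fr 3 (rlabel r)).
Definition Gl := Pos (fr 4 0).

Definition gtb (r s : rule) : bool :=
  if in_dec pair_eq_dec (rlabel r, rlabel s) (sup D) then true else false.
Definition lit_eqb (a b : literal) : bool := if lit_eq_dec a b then true else false.
Definition attk (r s : rule) : bool := lit_eqb (rhead s) (compl (rhead r)) && negb (gtb r s).

Definition freshlits := flat_map (fun a => [Dl a; compl (Dl a); Nl a; compl (Nl a); Xl a; compl (Xl a)]) lits ++
  flat_map (fun r => [Wl r; compl (Wl r)]) (filter isSD (rules D)).

Definition lab (i : rid) : label :=
  match i with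
  | IS r => 16 * rlabel r + 0
  | IDl a => 16 * li a + 1
  | IkD a => 16 * li a + 2
  | IN a => 16 * li a + 3
  | Im a => 16 * li a + 4
  | IxD a => 16 * li a + 5
  | Ip a => 16 * li a + 6
  | Ik a => 16 * li a + 7
  | Iw r => 16 * rlabel r + 8
  | IxW r => 16 * rlabel r + 9
  | Iv r s => 16 * Cantor.to_nat (rlabel r, rlabel s) + 10
  | IG => 16 * 0 + 11
  end.

Definition mk (i : rid) : rule :=
  match i with
  | IS r => mkRule (lab i) (rbody r) (rhead r) Strict
  | IDl a => mkRule (lab i) [a] (Dl a) Strict
  | IkD a => mkRule (lab i) [] (compl (Dl a)) Defeater
  | IN a => mkRule (lab i) [] (Nl a) Defeasible
  | Im a => mkRule (lab i) [Dl (compl a)] (compl (Nl a)) Defeater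
  | IxD a => mkRule (lab i) [Dl a] (Xl a) Defeasible
  | Ip a => mkRule (lab i) [Xl a] a Defeasible
  | Ik a => mkRule (lab i) [] (compl a) Defeater
  | Iw r => mkRule (lab i) (map Xl (rbody r)) (Wl r) Defeasible
  | IxW r => mkRule (lab i) [Nl (rhead r); Wl r] (Xl (rhead r)) Defeasible
  | Iv r s => mkRule (lab i) (map Xl (rbody s)) (compl (Wl r)) Defeater
  | IG => mkRule (lab i) freshlits Gl Defeasible
  end.

Definition perlit a := [IDl a; IkD a; IN a; Im a; IxD a; Ip a; Ik a].
Definition perrule r := Iw r :: IxW r :: map (Iv r) (filter (attk r) (rules D)).
Definition ids := map IS (filter isS (rules D)) ++ flat_map perlit lits ++
   flat_map perrule (filter isSD (rules D)) ++ [IG].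
Definition pairs : list (rid * rid) :=
  flat_map (fun a => [(Ip a, Ik a); (IkD a, IDl a); (Im a, IN a)]) lits ++
  flat_map (fun r => [(Ik (rhead r), IS r); (Ip (compl (rhead r)), IS r)]) (filter isS (rules D)) ++
  flat_map (fun r => map (fun s => (Iv r s, Iw r)) (filter (attk r) (rules D))) (filter isSD (rules D)).

Definition D' := mkTheory (facts D) (map mk (nodup rid_eq_dec ids))
   (map (fun ij => (lab (fst ij), lab (snd ij))) pairs).

End Constr.


Lemma nodup_map_inj {A B} (f : A -> B) l x y : NoDup (map f l) -> In x l -> In y l -> f x = f y -> x = y.
Proof.
  induction l as [|a l IH]; simpl; [tauto|]. intros hn hx hy he. inversion hn; subst.
  destruct hx as [<-|hx], hy as [<-|hy]; auto.
  - exfalso; apply H1; rewrite he; apply in_map; auto.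
  - exfalso; apply H1; rewrite <- he; apply in_map; auto.
Qed.

Lemma to_nat_inj x y : Cantor.to_nat x = Cantor.to_nat y -> x = y.
Proof. intros h; rewrite <- (Cantor.cancel_of_to x), <- (Cantor.cancel_of_to y), h; auto. Qed.

Ltac ids_destr H :=
  let r' := fresh "r" in let hr := fresh "hr" in let hk := fresh "hk" in let e := fresh "e" in
  let a' := fresh "a" in let ha := fresh "ha" in let s' := fresh "s" in let hs := fresh "hs" in
  let hh := fresh "hh" in let hg := fresh "hg" in
  destruct H as [[r' [e [hr hk]]]|[[a' [ha e]]|[[r' [hr [hk e]]]|e]]];
  [ try discriminate e | repeat (destruct e as [e|e]; [try discriminate e|]); try discriminate e
    | destruct e as [e|[e|[s' [hs [hh [hg e]]]]]]; try discriminate e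
    | try discriminate e ].

Section S.
Variable D : theory.
Hypothesis wfD : wf_theory D.

Lemma rule_lab_inj r r' : In r (rules D) -> In r' (rules D) -> rlabel r = rlabel r' -> r = r'.
Proof. intros; eapply nodup_map_inj; eauto; apply (proj1 wfD). Qed.

Lemma attk_iff r s : attk D r s = true <-> rhead s = compl (rhead r) /\ ~ gt D r s.
Proof.
  unfold attk, lit_eqb, gtb, gt, sup_rel. destruct (lit_eq_dec _ _), (in_dec _ _ _); simpl; split; intros h;
  try discriminate; try (destruct h; contradiction); auto.
Qed.

Lemma ids_char i : In i (ids D) ->
 (exists r, i = IS r /\ In r (rules D) /\ rkindof r = Strict) \/
 (exists a, atom_of a < M D /\ (i = IDl a \/ i = IkD a \/ i = IN a \/ i = Im a \/ i = IxD a \/ i = Ip a \/ i = Ik a)) \/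
 (exists r, In r (rules D) /\ isSD r = true /\ (i = Iw r \/ i = IxW r \/
     exists s, In s (rules D) /\ rhead s = compl (rhead r) /\ ~ gt D r s /\ i = Iv r s)) \/
 i = IG.
Proof.
  unfold ids; rewrite !in_app_iff, in_map_iff, !in_flat_map. intros [[r [<- hr]]|[[a [ha hi]]|[[r [hr hi]]|hi]]].
  - apply filter_In in hr; destruct hr as [hr hs]. left; exists r; split; auto; split; auto.
    unfold isS in hs; destruct (rkindof r); congruence.
  - right; left; exists a; split; [apply in_lits; auto|]. simpl in hi; intuition.
  - apply filter_In in hr; destruct hr as [hr hs]. right; right; left; exists r; split; [auto|split;[auto|]].
    simpl in hi. destruct hi as [<-|[<-|hi]]; auto. right; right.
    apply in_map_iff in hi; destruct hi as [s [<- hs']]. apply filter_In in hs'; destruct hs' as [hs' ha].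
    apply attk_iff in ha. exists s; intuition.
  - simpl in hi; destruct hi as [<-|[]]; auto.
Qed.

Lemma ids_in_IS r : In r (rules D) -> rkindof r = Strict -> In (IS r) (ids D).
Proof. intros h k; unfold ids; apply in_or_app; left; apply in_map, filter_In; split; auto; unfold isS; rewrite k; auto. Qed.
Lemma ids_in_lit a i : atom_of a < M D -> In i (perlit a) -> In i (ids D).
Proof. intros h k; unfold ids; apply in_or_app; right; apply in_or_app; left; apply in_flat_map; exists a; split; auto; apply in_lits; auto. Qed.
Lemma ids_in_rule r i : In r (rules D) -> isSD r = true -> In i (perrule D r) -> In i (ids D).
Proof. intros h s k; unfold ids; apply in_or_app; right; apply in_or_app; right; apply in_or_app; left; apply in_flat_map; exists r; split; auto; apply filter_In; auto. Qed.
Lemma ids_in_v r s : In r (rules D) -> isSD r = true -> In s (rules D) -> rhead s = compl (rhead r) -> ~ gt D r s -> In (Iv r s) (ids D).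
Proof. intros h1 h2 h3 h4 h5; apply (ids_in_rule r); auto. simpl; right; right; apply in_map, filter_In; split; auto; apply attk_iff; auto. Qed.

Lemma lab_mk i : rlabel (mk D i) = lab i.
Proof. destruct i; reflexivity. Qed.

Lemma ids_IS r : In (IS r) (ids D) -> In r (rules D) /\ rkindof r = Strict.
Proof. intros h; apply ids_char in h; ids_destr h. injection e as ->; auto. Qed.
Lemma ids_Iw r : In (Iw r) (ids D) -> In r (rules D) /\ isSD r = true.
Proof. intros h; apply ids_char in h; ids_destr h. injection e as ->; auto. Qed.
Lemma ids_IxW r : In (IxW r) (ids D) -> In r (rules D) /\ isSD r = true.
Proof. intros h; apply ids_char in h; ids_destr h. injection e as ->; auto. Qed.
Lemma ids_Iv r s : In (Iv r s) (ids D) -> In r (rules D) /\ isSD r = true /\ In s (rules D) /\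
   rhead s = compl (rhead r) /\ ~ gt D r s.
Proof. intros h; apply ids_char in h; ids_destr h. injection e as -> ->; auto. Qed.
Lemma lab_inj i j : In i (ids D) -> In j (ids D) -> lab i = lab j -> i = j.
Proof.
  intros hi hj.
  destruct i, j; intros h; cbn [lab] in h; try lia; try (f_equal; apply li_inj; lia); try reflexivity.
  - apply ids_IS in hi; apply ids_IS in hj. f_equal; apply rule_lab_inj; [tauto|tauto|unfold label in *; lia].
  - apply ids_Iw in hi; apply ids_Iw in hj. f_equal; apply rule_lab_inj; [tauto|tauto|unfold label in *; lia].
  - apply ids_IxW in hi; apply ids_IxW in hj. f_equal; apply rule_lab_inj; [tauto|tauto|unfold label in *; lia].
  - apply ids_Iv in hi; apply ids_Iv in hj.
    assert (Cantor.to_nat (rlabel r, rlabel s) = Cantor.to_nat (rlabel r0, rlabel s0)) by (unfold label in *; lia).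
    apply to_nat_inj in H; injection H as h1 h2.
    f_equal; apply rule_lab_inj; intuition.
Qed.


Lemma NoDup_map_on {A B} (f : A -> B) l : NoDup l -> (forall x y, In x l -> In y l -> f x = f y -> x = y) -> NoDup (map f l).
Proof.
  induction 1 as [|a l ha hn IH]; simpl; intros hi; constructor.
  - intros h; apply in_map_iff in h; destruct h as [y [e hy]].
    assert (y = a) by (apply hi; auto). subst; contradiction.
  - apply IH; intros; apply hi; auto.
Qed.

Lemma pairs_char i j : In (i, j) (pairs D) ->
  (exists a, atom_of a < M D /\ ((i = Ip a /\ j = Ik a) \/ (i = IkD a /\ j = IDl a) \/ (i = Im a /\ j = IN a))) \/
  (exists r, In r (rules D) /\ rkindof r = Strict /\ ((i = Ik (rhead r) /\ j = IS r) \/ (i = Ip (compl (rhead r)) /\ j = IS r))) \/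
  (exists r s, In r (rules D) /\ isSD r = true /\ In s (rules D) /\ rhead s = compl (rhead r) /\ ~ gt D r s /\ i = Iv r s /\ j = Iw r).
Proof.
  unfold pairs; rewrite !in_app_iff, !in_flat_map. intros [[a [ha hi]]|[[r [hr hi]]|[r [hr hi]]]].
  - left; exists a; split; [apply in_lits; auto|]. simpl in hi. intuition congruence.
  - apply filter_In in hr; destruct hr as [hr hs]. right; left; exists r; split; auto; split.
    + unfold isS in hs; destruct (rkindof r); congruence.
    + simpl in hi; intuition congruence.
  - apply filter_In in hr; destruct hr as [hr hs]. right; right.
    apply in_map_iff in hi; destruct hi as [s [e hs']]; apply filter_In in hs'; destruct hs' as [hs' ha].
    apply attk_iff in ha. injection e as <- <-. exists r, s; intuition.
Qed.

Lemma pairs_valid i j : In (i, j) (pairs D) -> In i (ids D) /\ In j (ids D).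
Proof.
  intros h; apply pairs_char in h.
  destruct h as [[a [ha hh]]|[[r [hr [hk hh]]]|[r [s [hr [hsd [hs [hh1 [hh2 [-> ->]]]]]]]]]].
  - destruct hh as [[-> ->]|[[-> ->]|[-> ->]]]; split; apply (ids_in_lit a); simpl; auto 10.
  - assert (atom_of (rhead r) < M D) by (apply head_lt; auto).
    destruct hh as [[-> ->]|[-> ->]]; (split; [|apply ids_in_IS; auto]).
    + apply (ids_in_lit (rhead r)); simpl; auto 10.
    + apply (ids_in_lit (compl (rhead r))); [rewrite atom_compl; auto|simpl; auto 10].
  - split; [apply ids_in_v; auto|apply (ids_in_rule r); simpl; auto].
Qed.

Lemma in_rules_D' FA t : In t (rules (add (D' D) (fact_theory FA))) <-> exists i, In i (ids D) /\ t = mk D i.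
Proof.
  simpl; rewrite app_nil_r, in_map_iff. split.
  - intros [i [<- h]]; exists i; split; auto; eapply nodup_In; eauto.
  - intros [i [h ->]]; exists i; split; auto; apply nodup_In; auto.
Qed.

Lemma gt_D' FA i j : In i (ids D) -> In j (ids D) ->
  (gt (add (D' D) (fact_theory FA)) (mk D i) (mk D j) <-> In (i, j) (pairs D)).
Proof.
  intros hi hj. unfold gt, sup_rel; cbn [sup add D' fact_theory]; rewrite app_nil_r, !lab_mk, in_map_iff. split.
  - intros [[i' j'] [e h]]. simpl in e. injection e as e1 e2.
    destruct (pairs_valid _ _ h). rewrite <- (lab_inj i' i), <- (lab_inj j' j); auto.
  - intros h; exists (i, j); auto.
Qed.

Definition rk (n : nat) : nat :=
  match n mod 16 with 6 => 2 | 7 => 1 | 2 => 1 | 4 => 1 | 10 => 1 | _ => 0 end.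

Lemma wf_D' : wf_theory (D' D).
Proof.
  split.
  - cbn [rules D']. rewrite map_map. rewrite (map_ext _ lab) by apply lab_mk.
    apply NoDup_map_on; [apply NoDup_nodup|].
    intros x y hx hy; apply lab_inj; eapply nodup_In; eauto.
  - assert (E : forall x y, sup_rel (D' D) x y -> rk y < rk x).
    { unfold sup_rel; cbn [sup D']; intros x y h. apply in_map_iff in h. destruct h as [[i j] [e h]].
      simpl in e; injection e as <- <-. apply pairs_char in h.
      destruct h as [[a [ha hh]]|[[r [hr [hk hh]]]|[r [s [hr [hsd [hs [hh1 [hh2 [-> ->]]]]]]]]]].
      - destruct hh as [[-> ->]|[[-> ->]|[-> ->]]]; unfold rk; cbn [lab]; rewrite !mod16; auto; lia.
      - destruct hh as [[-> ->]|[-> ->]]; unfold rk; cbn [lab]; rewrite !mod16; auto; lia.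
      - unfold rk; cbn [lab]; rewrite !mod16; auto; lia. }
    assert (E2 : forall x y, clos_trans label (sup_rel (D' D)) x y -> rk y < rk x).
    { induction 1; eauto; lia. }
    intros l h; apply E2 in h; lia.
Qed.
End S.


Section S.
Variable D : theory.
Hypothesis wfD : wf_theory D.
Variable FA : list literal.
Let DA := add D (fact_theory FA).
Let D'A := add (D' D) (fact_theory FA).

Ltac add_bounds :=
  repeat match goal with h : In ?r (rules D) |- _ =>
    let H := fresh "hb" in pose proof (head_lt D r h) as H; revert h end; intros.

Ltac lit_contra he :=
  first [ discriminate he
        | (unfold Dl, Nl, Xl, Wl, Gl, fr in he; first [discriminate he | injection he; intros; unfold label in *; lia])
        | (apply (f_equal atom_of) in he; unfold Dl, Nl, Xl, Wl, Gl, fr in he; cbn [atom_of compl] in he;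
           rewrite ?atom_compl in he; unfold label in *; lia) ].

Ltac cls_start :=
  let ht := fresh "ht" in let he := fresh "he" in let i := fresh "i" in let hi := fresh "hi" in
  let hc := fresh "hc" in
  intros [ht he]; apply in_rules_D' in ht; destruct ht as [i [hi ->]];
  pose proof hi as hc; apply ids_char in hc; ids_destr hc; subst i; cbn [mk rhead] in he;
  add_bounds.


Lemma Dl_inj a b : Dl D a = Dl D b -> a = b.
Proof. unfold Dl, fr; intros h; injection h; intros; apply li_inj; lia. Qed.
Lemma Nl_inj a b : Nl D a = Nl D b -> a = b.
Proof. unfold Nl, fr; intros h; injection h; intros; apply li_inj; lia. Qed.
Lemma Xl_inj a b : Xl D a = Xl D b -> a = b.
Proof. unfold Xl, fr; intros h; injection h; intros; apply li_inj; lia. Qed.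
Lemma Wl_inj r s : In r (rules D) -> In s (rules D) -> Wl D r = Wl D s -> r = s.
Proof. unfold Wl, fr; intros h1 h2 h; injection h; intros; apply (rule_lab_inj D wfD); auto; unfold label in *; lia. Qed.
Lemma compl_inj a b : compl a = compl b -> a = b.
Proof. intros h; rewrite <- (compl_compl a), h, compl_compl; auto. Qed.

Lemma cls_X a t : atom_of a < M D -> in_R D'A (Xl D a) t ->
  t = mk D (IxD a) \/ exists r, In r (rules D) /\ isSD r = true /\ rhead r = a /\ t = mk D (IxW r).
Proof.
  intros ha. cls_start; try lit_contra he.
  - apply Xl_inj in he; subst; auto.
  - apply Xl_inj in he; subst; right; eauto.
Qed.

Lemma cls_nX a t : in_R D'A (compl (Xl D a)) t -> False.
Proof. cls_start; lit_contra he. Qed.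

Lemma cls_W r t : In r (rules D) -> in_R D'A (Wl D r) t -> t = mk D (Iw r).
Proof. intros hr0. cls_start; try lit_contra he. apply Wl_inj in he; subst; auto. Qed.

Lemma cls_nW r t : In r (rules D) -> in_R D'A (compl (Wl D r)) t ->
  exists s, In s (rules D) /\ rhead s = compl (rhead r) /\ ~ gt D r s /\ t = mk D (Iv r s).
Proof. intros hr0. cls_start; try lit_contra he.
  apply compl_inj, Wl_inj in he; auto; subst; eauto. Qed.

Lemma cls_N a t : in_R D'A (Nl D a) t -> t = mk D (IN a).
Proof. cls_start; try lit_contra he. apply Nl_inj in he; subst; auto. Qed.
Lemma cls_nN a t : in_R D'A (compl (Nl D a)) t -> t = mk D (Im a).
Proof. cls_start; try lit_contra he. apply compl_inj, Nl_inj in he; subst; auto. Qed.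
Lemma cls_Dl a t : in_R D'A (Dl D a) t -> t = mk D (IDl a).
Proof. cls_start; try lit_contra he. apply Dl_inj in he; subst; auto. Qed.
Lemma cls_nDl a t : in_R D'A (compl (Dl D a)) t -> t = mk D (IkD a).
Proof. cls_start; try lit_contra he. apply compl_inj, Dl_inj in he; subst; auto. Qed.

Lemma cls_orig a t : atom_of a < M D -> in_R D'A a t ->
  (exists r, In r (rules D) /\ rkindof r = Strict /\ rhead r = a /\ t = mk D (IS r)) \/
  t = mk D (Ip a) \/ t = mk D (Ik (compl a)).
Proof.
  intros ha. cls_start; try lit_contra he.
  all: try (rewrite atom_compl in *; lit_contra he).
  - left; eauto.
  - subst; auto.
  - right; right; rewrite <- he, compl_compl; auto.
Qed.

Lemma in_D'A i : In i (ids D) -> In (mk D i) (rules D'A).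
Proof. intros h; apply in_rules_D'; eauto. Qed.

Lemma lit_ids a i : atom_of a < M D -> In i (perlit a) -> In i (ids D).
Proof. apply ids_in_lit. Qed.

Lemma gt_pairs i j : In i (ids D) -> In j (ids D) -> gt D'A (mk D i) (mk D j) -> In (i, j) (pairs D).
Proof. intros; eapply gt_D'; eauto. Qed.
Lemma pairs_gt i j : In (i, j) (pairs D) -> gt D'A (mk D i) (mk D j).
Proof. intros h; destruct (pairs_valid D _ _ h); eapply gt_D'; eauto. Qed.

Ltac pairs_contra h :=
  let h' := fresh in pose proof (pairs_char D _ _ h) as h';
  destruct h' as [[? [? hh]]|[[? [? [? hh]]]|[? [? [? [? [? [? [? [hh1 hh2]]]]]]]]]];
  [ intuition congruence | intuition congruence | try discriminate hh1; try discriminate hh2 ].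

Lemma gate_X a : atom_of a < M D -> gate D'A (Xl D a).
Proof.
  intros ha; split; [|split].
  - intros t ht; destruct (cls_X a t ha ht) as [->|[r [_ [_ [_ ->]]]]]; reflexivity.
  - intros t ht; destruct (cls_nX a t ht).
  - intros t s _ hs; destruct (cls_nX a s hs).
Qed.

Lemma gate_W r : In r (rules D) -> isSD r = true -> gate D'A (Wl D r).
Proof.
  intros hr hsd; split; [|split].
  - intros t ht; rewrite (cls_W r t hr ht); reflexivity.
  - intros t ht; destruct (cls_nW r t hr ht) as [s [_ [_ [_ ->]]]]; reflexivity.
  - intros t s ht hs. rewrite (cls_W r t hr ht) in *.
    destruct (cls_nW r s hr hs) as [s' [hs' [hhd [hg ->]]]].
    assert (i1 : In (Iw r) (ids D)) by (apply (ids_in_rule D r); simpl; auto).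
    assert (i2 : In (Iv r s') (ids D)) by (apply ids_in_v; auto).
    split.
    + apply pairs_gt. unfold pairs. apply in_or_app; right; apply in_or_app; right.
      apply in_flat_map; exists r; split; [apply filter_In; auto|].
      apply in_map_iff; exists s'; split; auto; apply filter_In; split; auto; apply attk_iff; auto.
    + intros g; apply gt_pairs in g; auto. pairs_contra g.
Qed.

Lemma gate_N a : atom_of a < M D -> gate D'A (Nl D a).
Proof.
  intros ha; split; [|split].
  - intros t ht; rewrite (cls_N a t ht); reflexivity.
  - intros t ht; rewrite (cls_nN a t ht); reflexivity.
  - intros t s ht hs. rewrite (cls_N a t ht), (cls_nN a s hs).
    assert (i1 : In (IN a) (ids D)) by (apply (lit_ids a); simpl; auto 10).
    assert (i2 : In (Im a) (ids D)) by (apply (lit_ids a); simpl; auto 10).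
    split.
    + apply pairs_gt. unfold pairs. apply in_or_app; left. apply in_flat_map; exists a; split; [apply in_lits; auto|simpl; auto].
    + intros g; apply gt_pairs in g; auto. pairs_contra g.
Qed.

Lemma blocked_Dl a : atom_of a < M D -> blocked D'A (Dl D a).
Proof.
  intros ha. exists (mk D (IkD a)).
  assert (i1 : In (IDl a) (ids D)) by (apply (lit_ids a); simpl; auto 10).
  assert (i2 : In (IkD a) (ids D)) by (apply (lit_ids a); simpl; auto 10).
  split; [split; [apply in_D'A; auto|reflexivity]|split; [reflexivity|]].
  intros t ht; rewrite (cls_Dl a t ht). split.
  - apply pairs_gt. unfold pairs. apply in_or_app; left. apply in_flat_map; exists a; split; [apply in_lits; auto|simpl; auto].
  - intros g; apply gt_pairs in g; auto. pairs_contra g.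
Qed.

Lemma origshape_a a : atom_of a < M D ->
  origshape D'A a (mk D (Ip a)) (mk D (Ik a)) (mk D (Ip (compl a))) (Xl D a) (Xl D (compl a)).
Proof.
  intros ha.
  assert (hca : atom_of (compl a) < M D) by (rewrite atom_compl; auto).
  assert (i1 : In (Ip a) (ids D)) by (apply (lit_ids a); simpl; auto 10).
  assert (i2 : In (Ik a) (ids D)) by (apply (lit_ids a); simpl; auto 10).
  assert (i3 : In (Ip (compl a)) (ids D)) by (apply (lit_ids (compl a)); simpl; auto 10).
  split; [split; [apply in_D'A; auto|reflexivity]|].
  split; [reflexivity|]. split; [reflexivity|].
  split; [split; [apply in_D'A; auto|reflexivity]|].
  split; [reflexivity|].
  split. { apply pairs_gt. unfold pairs. apply in_or_app; left. apply in_flat_map; exists a; split; [apply in_lits; auto|simpl; auto]. }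
  split; [split; [apply in_D'A; auto|reflexivity]|].
  split; [reflexivity|].
  split. { intros t ht. destruct (cls_orig a t ha ht) as [[r [_ [hk [_ ->]]]]|[ -> | -> ]]; auto. }
  split. { intros t ht. destruct (cls_orig (compl a) t hca ht) as [[r [_ [hk [_ ->]]]]|[ -> | -> ]]; auto.
           rewrite compl_compl; auto. }
  split. { intros t ht g. destruct (cls_orig a t ha ht) as [[r [hr [hk [_ ->]]]]|[ -> | -> ]]; auto.
    - apply gt_pairs in g; auto; [pairs_contra g|apply ids_in_IS; auto].
    - apply gt_pairs in g; auto; [pairs_contra g|apply (lit_ids (compl a)); simpl; auto 10]. }
  intros s hs hk. destruct (cls_orig (compl a) s hca hs) as [[r [hr [hk' [he ->]]]]|[ -> | -> ]]; try discriminate hk.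
  apply pairs_gt. unfold pairs. apply in_or_app; right; apply in_or_app; left.
  apply in_flat_map; exists r; split; [apply filter_In; split; [auto|unfold isS; rewrite hk'; auto]|].
  rewrite he, compl_compl; simpl; auto.
Qed.
End S.


Section G.
Variable D : theory.
Hypothesis wfD : wf_theory D.
Variable FA : list literal.
Hypothesis Hmod : modular D (D' D) (fact_theory FA).
Let DA := add D (fact_theory FA).
Let D'A := add (D' D) (fact_theory FA).
Let MM := M D.

Lemma fresh_ge f : In f (freshlits D) -> MM <= atom_of f.
Proof.
  unfold freshlits, MM; rewrite in_app_iff, !in_flat_map; intros [[a [ha h]]|[r [hr h]]]; simpl in h;
  unfold Dl, Nl, Xl, Wl, fr in h; repeat destruct h as [h|h]; subst; cbn [atom_of compl]; try lia; contradiction.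
Qed.

Lemma fresh_notFA f : In f (freshlits D) -> ~ In f FA.
Proof.
  intros hf hin. destruct Hmod as [h1 _].
  assert (h : in_Sigma D f).
  { apply h1; [left; exact hin|]. right. exists (mk D IG). split.
    - cbn [rules D']. apply in_map, nodup_In.
      unfold ids; rewrite !in_app_iff; right; right; right; left; auto.
    - right; exact hf. }
  apply sigma_lt in h. apply fresh_ge in hf. unfold MM in *; lia.
Qed.

Lemma fl_lit a x : atom_of a < MM -> In x [Dl D a; compl (Dl D a); Nl D a; compl (Nl D a); Xl D a; compl (Xl D a)] -> In x (freshlits D).
Proof. intros ha hx; unfold freshlits; apply in_or_app; left; apply in_flat_map; exists a; split; auto; apply in_lits; auto. Qed.
Lemma fl_W r x : In r (rules D) -> isSD r = true -> In x [Wl D r; compl (Wl D r)] -> In x (freshlits D).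
Proof. intros hr hs hx; unfold freshlits; apply in_or_app; right; apply in_flat_map; exists r; split; auto; apply filter_In; auto. Qed.

Lemma nofact f : In f (freshlits D) -> ~ In f (facts D'A).
Proof.
  intros hf h. cbn [facts D'A add D' fact_theory] in h. apply in_app_or in h. destruct h as [h|h].
  - apply fact_lt in h; apply fresh_ge in hf; unfold MM in *; lia.
  - apply (fresh_notFA f hf h).
Qed.

Lemma inR_DA q r : in_R DA q r <-> in_R D q r.
Proof. unfold in_R, DA; cbn [rules add fact_theory]; rewrite app_nil_r; tauto. Qed.
Lemma inRsd_DA q r : in_Rsd DA q r <-> in_Rsd D q r.
Proof. unfold in_Rsd; rewrite inR_DA; tauto. Qed.
Lemma inRs_DA q r : in_Rs DA q r <-> in_Rs D q r.
Proof. unfold in_Rs; rewrite inR_DA; tauto. Qed.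
Lemma gt_DA r s : gt DA r s <-> gt D r s.
Proof. unfold gt, sup_rel, DA; cbn [sup add fact_theory]; rewrite app_nil_r; tauto. Qed.

Lemma acyc r s : gt D r s -> gt D s r -> False.
Proof. intros h1 h2; apply (proj2 wfD (rlabel r)). eapply t_trans; apply t_step; eauto. Qed.


Definition kO a t := cls_orig D FA a t.
Definition kX a t := cls_X D FA a t.
Definition knX a t := cls_nX D FA a t.
Definition kW r t := cls_W D wfD FA r t.
Definition knW r t := cls_nW D wfD FA r t.
Definition kN a t := cls_N D FA a t.
Definition knN a t := cls_nN D FA a t.
Definition kDl a t := cls_Dl D FA a t.
Definition knDl a t := cls_nDl D FA a t.
Definition gX a := gate_X D FA a.
Definition gW r := gate_W D wfD FA r.
Definition gN a := gate_N D wfD FA a.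
Definition bDl a := blocked_Dl D wfD FA a.
Definition oS a := origshape_a D wfD FA a.
Definition inD' i := in_D'A D FA i.

Lemma delta_eq n : forall a, atom_of a < MM ->
  (iterT DA n (Plus,TDelta,a) <-> iterT D'A n (Plus,TDelta,a)) /\
  (iterT DA n (Minus,TDelta,a) <-> iterT D'A n (Minus,TDelta,a)).
Proof.
  induction n as [|n IH]; intros a ha; [cbn; tauto|].
  cbn [iterT T]. cbn [facts DA D'A add D' fact_theory].
  assert (AP : forall r, In r (rules D) -> (all_plus (iterT DA n) TDelta (rbody r) <-> all_plus (iterT D'A n) TDelta (rbody r))).
  { intros r hr; unfold all_plus; split; intros h b hb; apply (IH b (body_lt D r b hr hb)); auto. }
  assert (SM : forall r, In r (rules D) -> (some_minus (iterT DA n) TDelta (rbody r) <-> some_minus (iterT D'A n) TDelta (rbody r))).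
  { intros r hr; unfold some_minus; split; intros [b [hb h]]; exists b; split; auto; apply (IH b (body_lt D r b hr hb)); auto. }
  split; split.
  - intros [h|[r [hr h]]]; [left; auto|right]. apply inRs_DA in hr. destruct hr as [[hr1 hr2] hk].
    exists (mk D (IS r)); split; [split; [split|]|].
    + apply in_D'A; auto. apply ids_in_IS; auto.
    + exact hr2.
    + reflexivity.
    + apply (AP r); auto.
  - intros [h|[t [[ht hk] h]]]; [left; auto|right].
    destruct (kO a t ha ht) as [[r [hr [hk' [he ->]]]]|[ -> | -> ]]; try discriminate hk.
    exists r; split; [apply inRs_DA; split; [split|]; auto|]. apply AP; auto.
  - intros [hf h]; split; auto. intros t [ht hk].
    destruct (kO a t ha ht) as [[r [hr [hk' [he ->]]]]|[ -> | -> ]]; try discriminate hk.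
    apply (SM r); auto. apply h. apply inRs_DA; split; [split|]; auto.
  - intros [hf h]; split; auto. intros r hr. apply inRs_DA in hr. destruct hr as [[hr1 hr2] hk].
    apply (SM r); auto. apply (h (mk D (IS r))). split; [split|].
    + apply inD'; apply ids_in_IS; auto.
    + exact hr2.
    + reflexivity.
Qed.

Notation DerD := (derives DA).
Notation Der' := (derives D'A).

Definition winsD r := (forall b, In b (rbody r) -> DerD (Plus,TPartialStar,b)) /\
  forall s, In s (rules D) -> rhead s = compl (rhead r) -> ~ gt D r s -> exists c, In c (rbody s) /\ DerD (Minus,TPartialStar,c).
Definition losesD r := (exists b, In b (rbody r) /\ DerD (Minus,TPartialStar,b)) \/
  exists s, In s (rules D) /\ rhead s = compl (rhead r) /\ ~ gt D r s /\ forall c, In c (rbody s) -> DerD (Plus,TPartialStar,c).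

Lemma isSD_kind r : isSD r = true <-> (rkindof r = Strict \/ rkindof r = Defeasible).
Proof. unfold isSD; destruct (rkindof r); intuition congruence. Qed.

Lemma B1 a : DerD (Plus,TDelta,a) -> DerD (Plus,TPartialStar,a).
Proof. intros h; apply derives_T; cbn [T]; left; auto. Qed.

Lemma B2 r a : In r (rules D) -> isSD r = true -> rhead r = a -> winsD r ->
  DerD (Minus,TDelta,compl a) -> DerD (Plus,TPartialStar,a).
Proof.
  intros hr hs he [w1 w2] hd. apply derives_T; cbn [T]; right. exists r.
  split; [apply inRsd_DA; split; [split; auto|apply isSD_kind; auto]|].
  split; [intros b hb; apply w1; auto|]. split; [auto|].
  intros s hs'. apply inR_DA in hs'. destruct hs' as [hs1 hs2].
  destruct (classic (gt DA r s)) as [g|g]; [right; auto|left].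
  rewrite gt_DA in g. subst a. destruct (w2 s hs1 hs2 g) as [c [hc hc']]. exists c; auto.
Qed.

Lemma B3 a : DerD (Minus,TDelta,a) ->
  (forall r, In r (rules D) -> isSD r = true -> rhead r = a -> DerD (Plus,TDelta,compl a) \/ losesD r) ->
  DerD (Minus,TPartialStar,a).
Proof.
  intros hd h. apply derives_T; cbn [T]; split; auto.
  intros r hr. apply inRsd_DA in hr. destruct hr as [[hr1 hr2] hk].
  destruct (h r hr1 (proj2 (isSD_kind r) hk) hr2) as [x|[[b [hb x]]|[s [hs1 [hs2 [hs3 x]]]]]].
  - right; left; auto.
  - left; exists b; auto.
  - right; right; exists s. split; [apply inR_DA; split; auto; rewrite hs2, hr2; auto|].
    split; [intros c hc; apply x; auto|]. rewrite gt_DA; auto.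
Qed.

Lemma B4 a : DerD (Minus,TDelta,a) -> DerD (Plus,TPartialStar,compl a) -> DerD (Minus,TPartialStar,a).
Proof.
  intros hd hp. apply derives_unfold in hp. cbn [T] in hp.
  destruct hp as [hp|[r [hr [hb [hdn hs]]]]].
  - apply B3; auto.
  - apply derives_T; cbn [T]; split; auto. rewrite compl_compl in hdn, hs.
    intros t ht. destruct (hs t (proj1 ht)) as [x|x]; [left; auto|].
    right; right. exists r. split; [destruct hr; auto|]. split; [auto|].
    intros g. rewrite gt_DA in g, x. apply (acyc r t); auto.
Qed.

Variables d sg : tag.
Hypothesis Hd : tagok d sg.
Definition tg u := u = d \/ u = sg.

Lemma tg_ndelta u : tg u -> u <> TDelta.
Proof. intros [->| ->]; destruct Hd as [[-> ->]|[[-> ->]|[-> ->]]]; discriminate. Qed.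
Lemma tg_role u : tg u -> exists ub, role d sg u ub /\ tg ub.
Proof. intros [->| ->]; [exists sg|exists d]; split; unfold role, tg; auto. Qed.

Lemma inlit_R a i x : atom_of a < MM -> In i (perlit a) -> rhead (mk D i) = x -> in_R D'A x (mk D i).
Proof. intros ha hi hx; split; auto. apply inD'. apply (lit_ids D a); auto. Qed.

Lemma F1 a : atom_of a < MM -> Der' (Plus,TDelta,a) -> Der' (Plus,TDelta,Dl D a).
Proof.
  intros ha h; apply derives_T; cbn [T]; right. exists (mk D (IDl a)).
  split; [split; [apply (inlit_R a); simpl; auto 10|reflexivity]|]. intros b [<-|[]]; auto.
Qed.

Lemma F2 a : atom_of a < MM -> Der' (Minus,TDelta,a) -> Der' (Minus,TDelta,Dl D a).
Proof.
  intros ha h; apply derives_T; cbn [T]; split.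
  - apply nofact, (fl_lit a); simpl; auto.
  - intros t [ht _]. rewrite (kDl a t ht). exists a; simpl; auto.
Qed.

Lemma F3 f : In f (freshlits D) -> (forall t, in_R D'A f t -> rkindof t <> Strict) -> Der' (Minus,TDelta,f).
Proof.
  intros hf hs; apply derives_T; cbn [T]; split; [apply nofact; auto|].
  intros t [ht hk]; exfalso; apply (hs t ht hk).
Qed.

Lemma F3N a : atom_of a < MM -> Der' (Minus,TDelta,Nl D a).
Proof. intros ha; apply F3; [apply (fl_lit a); simpl; auto 10|]. intros t ht; rewrite (kN a t ht); discriminate. Qed.
Lemma F3nN a : atom_of a < MM -> Der' (Minus,TDelta,compl (Nl D a)).
Proof. intros ha; apply F3; [apply (fl_lit a); simpl; auto 10|]. intros t ht; rewrite (knN a t ht); discriminate. Qed.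
Lemma F3X a : atom_of a < MM -> Der' (Minus,TDelta,Xl D a).
Proof. intros ha; apply F3; [apply (fl_lit a); simpl; auto 10|]. intros t ht.
  destruct (kX a t ha ht) as [->|[r [_ [_ [_ ->]]]]]; discriminate. Qed.
Lemma F3nX a : atom_of a < MM -> Der' (Minus,TDelta,compl (Xl D a)).
Proof. intros ha; apply F3; [apply (fl_lit a); simpl; auto 10|]. intros t ht; destruct (knX a t ht). Qed.
Lemma F3W r : In r (rules D) -> isSD r = true -> Der' (Minus,TDelta,Wl D r).
Proof. intros hr hs; apply F3; [apply (fl_W r); simpl; auto|]. intros t ht; rewrite (kW r t hr ht); discriminate. Qed.
Lemma F3nW r : In r (rules D) -> isSD r = true -> Der' (Minus,TDelta,compl (Wl D r)).
Proof. intros hr hs; apply F3; [apply (fl_W r); simpl; auto|]. intros t ht.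
  destruct (knW r t hr ht) as [s [_ [_ [_ ->]]]]; discriminate. Qed.

Lemma F4p a u : tg u -> Der' (Plus,TDelta,Dl D a) -> Der' (Plus,u,Dl D a).
Proof. intros hu h; apply derives_T, plus_from_delta; auto; apply tg_ndelta; auto. Qed.
Lemma F4m a u : atom_of a < MM -> tg u -> Der' (Minus,TDelta,Dl D a) -> Der' (Minus,u,Dl D a).
Proof. intros ha hu h; destruct (tg_role u hu) as [ub [hr _]]. apply derives_T; eapply blocked_minus_in; eauto. apply bDl; auto. Qed.

Lemma F5 a u ub : atom_of a < MM -> role d sg u ub -> Der' (Minus,ub,Dl D (compl a)) -> Der' (Plus,u,Nl D a).
Proof.
  intros ha hr h. apply derives_T. eapply gate_plus_in; eauto.
  - apply gN; auto.
  - apply F3nN; auto.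
  - exists (mk D (IN a)); split; [apply (inlit_R a); simpl; auto 10|]. intros z [].
  - intros s hs; rewrite (knN a s hs). exists (Dl D (compl a)); simpl; auto.
Qed.

Lemma F6 a u ub : atom_of a < MM -> role d sg u ub -> Der' (Plus,ub,Dl D (compl a)) -> Der' (Minus,u,Nl D a).
Proof.
  intros ha hr h. apply derives_T. eapply gate_minus_in; eauto.
  - apply gN; auto.
  - apply F3N; auto.
  - right. exists (mk D (Im a)); split; [apply (inlit_R a); simpl; auto 10|]. intros z [<-|[]]; auto.
Qed.

Lemma F7 a u : atom_of a < MM -> tg u ->
  (Der' (Plus,u,Dl D a) \/ exists r, In r (rules D) /\ isSD r = true /\ rhead r = a /\ Der' (Plus,u,Nl D a) /\ Der' (Plus,u,Wl D r)) ->
  Der' (Plus,u,Xl D a).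
Proof.
  intros ha hu h. destruct (tg_role u hu) as [ub [hr _]]. apply derives_T. eapply gate_plus_in; eauto.
  - apply gX; auto.
  - apply F3nX; auto.
  - destruct h as [h|[r [hr1 [hr2 [hr3 [h1 h2]]]]]].
    + exists (mk D (IxD a)); split; [apply (inlit_R a); simpl; auto 10|]. intros z [<-|[]]; auto.
    + exists (mk D (IxW r)); split; [split; [apply inD', (ids_in_rule D r); simpl; auto|simpl; rewrite hr3; auto]|].
      simpl; rewrite hr3. intros z [<-|[<-|[]]]; auto.
  - intros s hs; destruct (knX a s hs).
Qed.

Lemma F8 a u : atom_of a < MM -> tg u -> Der' (Minus,u,Dl D a) ->
  (forall r, In r (rules D) -> isSD r = true -> rhead r = a -> Der' (Minus,u,Nl D a) \/ Der' (Minus,u,Wl D r)) ->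
  Der' (Minus,u,Xl D a).
Proof.
  intros ha hu h1 h2. destruct (tg_role u hu) as [ub [hr _]]. apply derives_T. eapply gate_minus_in; eauto.
  - apply gX; auto.
  - apply F3X; auto.
  - left. intros t ht. destruct (kX a t ha ht) as [->|[r [r1 [r2 [r3 ->]]]]].
    + exists (Dl D a); simpl; auto.
    + simpl. rewrite r3. destruct (h2 r r1 r2 r3) as [x|x]; [exists (Nl D a)|exists (Wl D r)]; simpl; auto.
Qed.

Lemma F9 r u ub : In r (rules D) -> isSD r = true -> role d sg u ub ->
  (forall b, In b (rbody r) -> Der' (Plus,u,Xl D b)) ->
  (forall s, In s (rules D) -> rhead s = compl (rhead r) -> ~ gt D r s -> exists c, In c (rbody s) /\ Der' (Minus,ub,Xl D c)) ->
  Der' (Plus,u,Wl D r).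
Proof.
  intros hr hs hro h1 h2. apply derives_T. eapply gate_plus_in; eauto.
  - apply gW; auto.
  - apply F3nW; auto.
  - exists (mk D (Iw r)); split; [split; [apply inD', (ids_in_rule D r); simpl; auto|reflexivity]|].
    simpl. intros z hz; apply in_map_iff in hz; destruct hz as [b [<- hb]]; auto.
  - intros s' hs'. destruct (knW r s' hr hs') as [s [s1 [s2 [s3 ->]]]].
    destruct (h2 s s1 s2 s3) as [c [hc hc']]. exists (Xl D c); split; auto; simpl; apply in_map; auto.
Qed.

Lemma F10 r u ub : In r (rules D) -> isSD r = true -> role d sg u ub ->
  ((exists b, In b (rbody r) /\ Der' (Minus,u,Xl D b)) \/
   (exists s, In s (rules D) /\ rhead s = compl (rhead r) /\ ~ gt D r s /\ forall c, In c (rbody s) -> Der' (Plus,ub,Xl D c))) ->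
  Der' (Minus,u,Wl D r).
Proof.
  intros hr hs hro h. apply derives_T. eapply gate_minus_in; eauto.
  - apply gW; auto.
  - apply F3W; auto.
  - destruct h as [[b [hb h]]|[s [s1 [s2 [s3 h]]]]].
    + left. intros t ht. rewrite (kW r t hr ht). exists (Xl D b); split; auto; simpl; apply in_map; auto.
    + right. exists (mk D (Iv r s)); split; [split; [apply inD', ids_in_v; auto|reflexivity]|].
      simpl. intros z hz; apply in_map_iff in hz; destruct hz as [c [<- hc]]; auto.
Qed.

Lemma F11 a : atom_of a < MM -> Der' (Plus,d,Xl D a) -> Der' (Minus,TDelta,compl a) ->
  Der' (Minus,sg,Xl D (compl a)) -> Der' (Plus,d,a).
Proof. intros ha h1 h2 h3. apply derives_T. eapply orig_plus_in; eauto. apply oS; auto. Qed.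

Lemma F12 a : atom_of a < MM -> Der' (Minus,TDelta,a) -> (Der' (Minus,d,Xl D a) \/ Der' (Plus,TDelta,compl a)) ->
  Der' (Minus,d,a).
Proof. intros ha h1 h2. apply derives_T. eapply orig_minus_in; eauto. apply oS; auto. Qed.

Lemma dtrans n a s : atom_of a < MM -> iterT DA n (s,TDelta,a) -> Der' (s,TDelta,a).
Proof. intros ha h; exists n. destruct s; apply (delta_eq n a ha); auto. Qed.
Lemma dtransD a s : atom_of a < MM -> DerD (s,TDelta,a) -> Der' (s,TDelta,a).
Proof. intros ha [n h]; eapply dtrans; eauto. Qed.
Lemma dtransB a s : atom_of a < MM -> Der' (s,TDelta,a) -> DerD (s,TDelta,a).
Proof. intros ha [n h]; exists n. destruct s; apply (delta_eq n a ha); auto. Qed.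

Lemma inRsd_D r a : in_Rsd DA a r -> In r (rules D) /\ rhead r = a /\ isSD r = true.
Proof. intros h; apply inRsd_DA in h; destruct h as [[h1 h2] h3]; split; auto; split; auto; apply isSD_kind; auto. Qed.
Lemma D_inRsd r : In r (rules D) -> isSD r = true -> in_Rsd DA (rhead r) r.
Proof. intros h1 h2; apply inRsd_DA; split; [split; auto|apply isSD_kind; auto]. Qed.

Lemma Fwd n : forall a, atom_of a < MM ->
 (iterT DA n (Plus,TPartialStar,a) -> (forall u, tg u -> Der' (Plus,u,Xl D a)) /\ Der' (Plus,d,a)) /\
 (iterT DA n (Minus,TPartialStar,a) -> (forall u, tg u -> Der' (Minus,u,Xl D a)) /\ Der' (Minus,d,a)).
Proof.
  induction n as [|n IH]; intros a ha; [cbn; tauto|].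
  assert (hca : atom_of (compl a) < MM) by (rewrite atom_compl; auto).
  assert (dT : tg d) by (left; auto). assert (sT : tg sg) by (right; auto).
  cbn [iterT T]. split.
  - intros [h|[r [hr [hb [hdn hs]]]]].
    + apply (dtrans n a) in h; auto. split.
      * intros u hu. apply F7; auto. left. apply F4p; auto. apply F1; auto.
      * apply derives_T, plus_from_delta; auto. apply tg_ndelta; auto.
    + destruct (inRsd_D r a hr) as [r1 [r2 r3]].
      assert (HB : forall b, In b (rbody r) -> forall u, tg u -> Der' (Plus,u,Xl D b)).
      { intros b hb' u hu. apply (proj1 (IH b (body_lt D r b r1 hb')) (hb b hb')); auto. }
      apply (dtrans n (compl a)) in hdn; auto.
      assert (HW : forall u, tg u -> Der' (Plus,u,Wl D r)).
      { intros u hu. destruct (tg_role u hu) as [ub [hro hub]]. eapply F9; eauto.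
        intros s s1 s2 s3. destruct (hs s) as [[c [hc hc']]|g].
        - apply inR_DA; split; auto; rewrite s2, r2; auto.
        - exists c; split; auto. apply (proj2 (IH c (body_lt D s c s1 hc)) hc'); auto.
        - rewrite gt_DA in g; contradiction. }
      assert (HX : forall u, tg u -> Der' (Plus,u,Xl D a)).
      { intros u hu. destruct (tg_role u hu) as [ub [hro hub]]. apply F7; auto. right. exists r.
        split; [auto|split;[auto|split;[auto|split;[|auto]]]].
        eapply F5; eauto. apply F4m; auto. apply F2; auto. }
      split; auto.
      apply F11; auto.
      apply F8; auto. { apply F4m; auto. apply F2; auto. }
      intros r' q1 q2 q3. right. eapply (F10 r' sg d); eauto; [right; auto|].
      destruct (hs r') as [[c [hc hc']]|g].
      * apply inR_DA; split; auto.
      * left. exists c; split; auto. apply (proj2 (IH c (body_lt D r' c q1 hc)) hc'); auto.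
      * right. exists r. rewrite gt_DA in g. split; [auto|split; [rewrite q3, compl_compl; auto|split]].
        -- intros g'; apply (acyc r r'); auto.
        -- intros c hc; apply HB; auto.
  - intros [hd h]. apply (dtrans n a) in hd; auto.
    assert (HX : forall u, tg u -> Der' (Minus,u,Xl D a)).
    { intros u hu. destruct (tg_role u hu) as [ub [hro hub]]. apply F8; auto.
      - apply F4m; auto; apply F2; auto.
      - intros r r1 r2 r3. destruct (h r) as [[b [hb hb']]|[x|[s [hs1 [hs2 hs3]]]]].
        + rewrite <- r3; apply D_inRsd; auto.
        + right. eapply F10; eauto. left. exists b; split; auto.
          apply (proj2 (IH b (body_lt D r b r1 hb)) hb'); auto.
        + left. eapply F6; eauto. apply F4p; auto. apply F1; auto. eapply dtrans; eauto.
        + right. eapply F10; eauto. right. apply inR_DA in hs1. destruct hs1 as [hs1 hs1'].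
          exists s. split; [auto|split;[rewrite hs1', r3; auto|split]].
          * rewrite <- gt_DA; auto.
          * intros c hc. apply (proj1 (IH c (body_lt D s c hs1 hc)) (hs2 c hc)); auto. }
    split; auto. apply F12; auto.
Qed.

Definition Int (c : conclusion) : Prop :=
 (forall a, atom_of a < MM ->
   (c = (Plus,TDelta,a) -> DerD (Plus,TDelta,a)) /\ (c = (Minus,TDelta,a) -> DerD (Minus,TDelta,a)) /\
   (c = (Plus,d,a) -> DerD (Plus,TPartialStar,a)) /\ (c = (Minus,d,a) -> DerD (Minus,TPartialStar,a))) /\
 (forall a u, atom_of a < MM -> (u = TDelta \/ tg u) ->
   (c = (Plus,u,Dl D a) -> DerD (Plus,TDelta,a)) /\ (c = (Minus,u,Dl D a) -> DerD (Minus,TDelta,a))) /\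
 (forall a, atom_of a < MM -> c = (Plus,TDelta,Nl D a) -> False) /\
 (forall a u, atom_of a < MM -> tg u ->
   (c = (Plus,u,Nl D a) -> DerD (Minus,TDelta,compl a)) /\ (c = (Minus,u,Nl D a) -> DerD (Plus,TDelta,compl a))) /\
 (forall a, atom_of a < MM -> c = (Plus,TDelta,Xl D a) -> False) /\
 (forall a u, atom_of a < MM -> tg u ->
   (c = (Plus,u,Xl D a) -> DerD (Plus,TPartialStar,a)) /\ (c = (Minus,u,Xl D a) -> DerD (Minus,TPartialStar,a))) /\
 (forall r, In r (rules D) -> isSD r = true -> c = (Plus,TDelta,Wl D r) -> False) /\
 (forall r u, In r (rules D) -> isSD r = true -> tg u ->
   (c = (Plus,u,Wl D r) -> winsD r) /\ (c = (Minus,u,Wl D r) -> losesD r)) /\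
 (forall a, atom_of a < MM -> c = (Plus,TDelta,compl (Nl D a)) -> False) /\
 (forall a, atom_of a < MM -> c = (Plus,TDelta,compl (Xl D a)) -> False) /\
 (forall r, In r (rules D) -> isSD r = true -> c = (Plus,TDelta,compl (Wl D r)) -> False).

Section Acc.
Variable E : cset.
Hypothesis Hi : forall c, E c -> Int c.
Lemma I_oPD a : atom_of a < MM -> E (Plus,TDelta,a) -> DerD (Plus,TDelta,a).
Proof. intros ha e; destruct (Hi _ e) as (i1 & i2 & i3 & i4 & i5 & i6 & i7 & i8 & i9 & i10 & i11); apply (i1 a ha); auto. Qed.
Lemma I_oMD a : atom_of a < MM -> E (Minus,TDelta,a) -> DerD (Minus,TDelta,a).
Proof. intros ha e; destruct (Hi _ e) as (i1 & i2 & i3 & i4 & i5 & i6 & i7 & i8 & i9 & i10 & i11); apply (i1 a ha); auto. Qed.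
Lemma I_DlP a u : atom_of a < MM -> (u = TDelta \/ tg u) -> E (Plus,u,Dl D a) -> DerD (Plus,TDelta,a).
Proof. intros ha hu e; destruct (Hi _ e) as (i1 & i2 & i3 & i4 & i5 & i6 & i7 & i8 & i9 & i10 & i11); apply (i2 a u ha hu); auto. Qed.
Lemma I_DlM a u : atom_of a < MM -> (u = TDelta \/ tg u) -> E (Minus,u,Dl D a) -> DerD (Minus,TDelta,a).
Proof. intros ha hu e; destruct (Hi _ e) as (i1 & i2 & i3 & i4 & i5 & i6 & i7 & i8 & i9 & i10 & i11); apply (i2 a u ha hu); auto. Qed.
Lemma I_NPD a : atom_of a < MM -> E (Plus,TDelta,Nl D a) -> False.
Proof. intros ha e; destruct (Hi _ e) as (i1 & i2 & i3 & i4 & i5 & i6 & i7 & i8 & i9 & i10 & i11); apply (i3 a ha); auto. Qed.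
Lemma I_NP a u : atom_of a < MM -> tg u -> E (Plus,u,Nl D a) -> DerD (Minus,TDelta,compl a).
Proof. intros ha hu e; destruct (Hi _ e) as (i1 & i2 & i3 & i4 & i5 & i6 & i7 & i8 & i9 & i10 & i11); apply (i4 a u ha hu); auto. Qed.
Lemma I_NM a u : atom_of a < MM -> tg u -> E (Minus,u,Nl D a) -> DerD (Plus,TDelta,compl a).
Proof. intros ha hu e; destruct (Hi _ e) as (i1 & i2 & i3 & i4 & i5 & i6 & i7 & i8 & i9 & i10 & i11); apply (i4 a u ha hu); auto. Qed.
Lemma I_XPD a : atom_of a < MM -> E (Plus,TDelta,Xl D a) -> False.
Proof. intros ha e; destruct (Hi _ e) as (i1 & i2 & i3 & i4 & i5 & i6 & i7 & i8 & i9 & i10 & i11); apply (i5 a ha); auto. Qed.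
Lemma I_XP a u : atom_of a < MM -> tg u -> E (Plus,u,Xl D a) -> DerD (Plus,TPartialStar,a).
Proof. intros ha hu e; destruct (Hi _ e) as (i1 & i2 & i3 & i4 & i5 & i6 & i7 & i8 & i9 & i10 & i11); apply (i6 a u ha hu); auto. Qed.
Lemma I_XM a u : atom_of a < MM -> tg u -> E (Minus,u,Xl D a) -> DerD (Minus,TPartialStar,a).
Proof. intros ha hu e; destruct (Hi _ e) as (i1 & i2 & i3 & i4 & i5 & i6 & i7 & i8 & i9 & i10 & i11); apply (i6 a u ha hu); auto. Qed.
Lemma I_WPD r : In r (rules D) -> isSD r = true -> E (Plus,TDelta,Wl D r) -> False.
Proof. intros h1 h2 e; destruct (Hi _ e) as (i1 & i2 & i3 & i4 & i5 & i6 & i7 & i8 & i9 & i10 & i11); apply (i7 r h1 h2); auto. Qed.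
Lemma I_WP r u : In r (rules D) -> isSD r = true -> tg u -> E (Plus,u,Wl D r) -> winsD r.
Proof. intros h1 h2 hu e; destruct (Hi _ e) as (i1 & i2 & i3 & i4 & i5 & i6 & i7 & i8 & i9 & i10 & i11); apply (i8 r u h1 h2 hu); auto. Qed.
Lemma I_WM r u : In r (rules D) -> isSD r = true -> tg u -> E (Minus,u,Wl D r) -> losesD r.
Proof. intros h1 h2 hu e; destruct (Hi _ e) as (i1 & i2 & i3 & i4 & i5 & i6 & i7 & i8 & i9 & i10 & i11); apply (i8 r u h1 h2 hu); auto. Qed.
Lemma I_nN a : atom_of a < MM -> E (Plus,TDelta,compl (Nl D a)) -> False.
Proof. intros ha e; destruct (Hi _ e) as (i1 & i2 & i3 & i4 & i5 & i6 & i7 & i8 & i9 & i10 & i11); apply (i9 a ha); auto. Qed.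
Lemma I_nX a : atom_of a < MM -> E (Plus,TDelta,compl (Xl D a)) -> False.
Proof. intros ha e; destruct (Hi _ e) as (i1 & i2 & i3 & i4 & i5 & i6 & i7 & i8 & i9 & i10 & i11); apply (i10 a ha); auto. Qed.
Lemma I_nW r : In r (rules D) -> isSD r = true -> E (Plus,TDelta,compl (Wl D r)) -> False.
Proof. intros h1 h2 e; destruct (Hi _ e) as (i1 & i2 & i3 & i4 & i5 & i6 & i7 & i8 & i9 & i10 & i11); apply (i11 r h1 h2); auto. Qed.
End Acc.

Section Step.
Variable E : cset.
Hypothesis Hi : forall c, E c -> Int c.

Lemma nostrictfact f : In f (freshlits D) -> (forall t, in_R D'A f t -> rkindof t <> Strict) ->
  T D'A E (Plus,TDelta,f) -> False.
Proof. intros hf hs [h|[t [[ht hk] _]]]; [apply (nofact f hf h)|apply (hs t ht hk)]. Qed.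

Lemma S_NPD a : atom_of a < MM -> T D'A E (Plus,TDelta,Nl D a) -> False.
Proof. intros ha; apply nostrictfact; [apply (fl_lit a); simpl; auto 10|]. intros t ht; rewrite (kN a t ht); discriminate. Qed.
Lemma S_nN a : atom_of a < MM -> T D'A E (Plus,TDelta,compl (Nl D a)) -> False.
Proof. intros ha; apply nostrictfact; [apply (fl_lit a); simpl; auto 10|]. intros t ht; rewrite (knN a t ht); discriminate. Qed.
Lemma S_XPD a : atom_of a < MM -> T D'A E (Plus,TDelta,Xl D a) -> False.
Proof. intros ha; apply nostrictfact; [apply (fl_lit a); simpl; auto 10|]. intros t ht.
  destruct (kX a t ha ht) as [->|[r [_ [_ [_ ->]]]]]; discriminate. Qed.
Lemma S_nX a : atom_of a < MM -> T D'A E (Plus,TDelta,compl (Xl D a)) -> False.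
Proof. intros ha; apply nostrictfact; [apply (fl_lit a); simpl; auto 10|]. intros t ht; destruct (knX a t ht). Qed.
Lemma S_WPD r : In r (rules D) -> isSD r = true -> T D'A E (Plus,TDelta,Wl D r) -> False.
Proof. intros hr hs; apply nostrictfact; [apply (fl_W r); simpl; auto|]. intros t ht; rewrite (kW r t hr ht); discriminate. Qed.
Lemma S_nW r : In r (rules D) -> isSD r = true -> T D'A E (Plus,TDelta,compl (Wl D r)) -> False.
Proof. intros hr hs; apply nostrictfact; [apply (fl_W r); simpl; auto|]. intros t ht.
  destruct (knW r t hr ht) as [s' [_ [_ [_ ->]]]]; discriminate. Qed.

Lemma S_DlPD a : atom_of a < MM -> T D'A E (Plus,TDelta,Dl D a) -> DerD (Plus,TDelta,a).
Proof.
  intros ha [h|[t [[ht hk] hb]]].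
  - exfalso; apply (nofact (Dl D a)); auto; apply (fl_lit a); simpl; auto.
  - rewrite (kDl a t ht) in hb. apply (I_oPD E Hi a ha). apply hb; simpl; auto.
Qed.
Lemma S_DlMD a : atom_of a < MM -> T D'A E (Minus,TDelta,Dl D a) -> DerD (Minus,TDelta,a).
Proof.
  intros ha [_ h]. destruct (h (mk D (IDl a))) as [b [[<-|[]] hb]].
  - split; [apply (inlit_R a); simpl; auto 10|reflexivity].
  - apply (I_oMD E Hi a ha hb).
Qed.
Lemma S_DlP a u : atom_of a < MM -> tg u -> T D'A E (Plus,u,Dl D a) -> DerD (Plus,TDelta,a).
Proof.
  intros ha hu h. destruct (tg_role u hu) as [ub [hr _]].
  apply (blocked_plus_out _ _ _ d sg u ub Hd hr (bDl a ha)) in h. apply (I_DlP E Hi a TDelta ha); auto.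
Qed.
Lemma S_DlM a u : atom_of a < MM -> tg u -> T D'A E (Minus,u,Dl D a) -> DerD (Minus,TDelta,a).
Proof.
  intros ha hu h. apply minus_to_delta in h; [|apply tg_ndelta; auto]. apply (I_DlM E Hi a TDelta ha); auto.
Qed.

Lemma S_NP a u : atom_of a < MM -> tg u -> T D'A E (Plus,u,Nl D a) -> DerD (Minus,TDelta,compl a).
Proof.
  intros ha hu h. destruct (tg_role u hu) as [ub [hr hub]].
  assert (hca : atom_of (compl a) < MM) by (rewrite atom_compl; auto).
  destruct (gate_plus_out _ _ _ d sg u ub Hd hr (gN a ha) h) as [x|[_ x]].
  - destruct (I_NPD E Hi a ha x).
  - destruct (x (mk D (Im a))) as [b [[<-|[]] hb]].
    + apply (inlit_R a); simpl; auto 10.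
    + apply (I_DlM E Hi (compl a) ub); auto.
Qed.
Lemma S_NM a u : atom_of a < MM -> tg u -> T D'A E (Minus,u,Nl D a) -> DerD (Plus,TDelta,compl a).
Proof.
  intros ha hu h. destruct (tg_role u hu) as [ub [hr hub]].
  assert (hca : atom_of (compl a) < MM) by (rewrite atom_compl; auto).
  destruct (gate_minus_out _ _ _ d sg u ub Hd hr (gN a ha) h) as [_ [x|[x|[s' [hs x]]]]].
  - destruct (x (mk D (IN a))) as [b [[] _]]. apply (inlit_R a); simpl; auto 10.
  - destruct (I_nN E Hi a ha x).
  - rewrite (knN a s' hs) in x. apply (I_DlP E Hi (compl a) ub); auto. apply x; simpl; auto.
Qed.

Lemma S_XP a u : atom_of a < MM -> tg u -> T D'A E (Plus,u,Xl D a) -> DerD (Plus,TPartialStar,a).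
Proof.
  intros ha hu h. destruct (tg_role u hu) as [ub [hr hub]].
  destruct (gate_plus_out _ _ _ d sg u ub Hd hr (gX a ha) h) as [x|[[t [ht x]] _]].
  - destruct (I_XPD E Hi a ha x).
  - destruct (kX a t ha ht) as [->|[r [r1 [r2 [r3 ->]]]]].
    + apply B1. apply (I_DlP E Hi a u); auto. apply x; simpl; auto.
    + simpl in x. apply (B2 r a); auto.
      * apply (I_WP E Hi r u); auto. apply x; simpl; auto.
      * apply (I_NP E Hi a u); auto. rewrite <- r3. apply x; simpl; auto.
Qed.

Lemma S_XM a u : atom_of a < MM -> tg u -> T D'A E (Minus,u,Xl D a) -> DerD (Minus,TPartialStar,a).
Proof.
  intros ha hu h. destruct (tg_role u hu) as [ub [hr hub]].
  destruct (gate_minus_out _ _ _ d sg u ub Hd hr (gX a ha) h) as [_ [x|[x|[s' [hs x]]]]].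
  - apply B3.
    + destruct (x (mk D (IxD a))) as [b [[<-|[]] hb]]; [apply (inlit_R a); simpl; auto 10|].
      apply (I_DlM E Hi a u); auto.
    + intros r r1 r2 r3. destruct (x (mk D (IxW r))) as [b [hb hb']].
      * split; [apply inD', (ids_in_rule D r); simpl; auto|simpl; rewrite r3; auto].
      * simpl in hb. rewrite r3 in hb. destruct hb as [<-|[<-|[]]].
        -- left; apply (I_NM E Hi a u); auto.
        -- right; apply (I_WM E Hi r u); auto.
  - destruct (I_nX E Hi a ha x).
  - destruct (knX a s' hs).
Qed.

Lemma S_WP r u : In r (rules D) -> isSD r = true -> tg u -> T D'A E (Plus,u,Wl D r) -> winsD r.
Proof.
  intros hr hsd hu h. destruct (tg_role u hu) as [ub [hro hub]].
  destruct (gate_plus_out _ _ _ d sg u ub Hd hro (gW r hr hsd) h) as [x|[[t [ht x]] y]].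
  - destruct (I_WPD E Hi r hr hsd x).
  - rewrite (kW r t hr ht) in x. simpl in x. split.
    + intros b hb. apply (I_XP E Hi b u); auto. apply (body_lt D r b hr hb). apply x, in_map; auto.
    + intros s s1 s2 s3. destruct (y (mk D (Iv r s))) as [z [hz hz']].
      * split; [apply inD', ids_in_v; auto|reflexivity].
      * simpl in hz. apply in_map_iff in hz. destruct hz as [c [<- hc]].
        exists c; split; auto. apply (I_XM E Hi c ub); auto. apply (body_lt D s c s1 hc).
Qed.

Lemma S_WM r u : In r (rules D) -> isSD r = true -> tg u -> T D'A E (Minus,u,Wl D r) -> losesD r.
Proof.
  intros hr hsd hu h. destruct (tg_role u hu) as [ub [hro hub]].
  destruct (gate_minus_out _ _ _ d sg u ub Hd hro (gW r hr hsd) h) as [_ [x|[x|[s' [hs x]]]]].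
  - left. destruct (x (mk D (Iw r))) as [z [hz hz']].
    + split; [apply inD', (ids_in_rule D r); simpl; auto|reflexivity].
    + simpl in hz. apply in_map_iff in hz. destruct hz as [b [<- hb]].
      exists b; split; auto. apply (I_XM E Hi b u); auto. apply (body_lt D r b hr hb).
  - destruct (I_nW E Hi r hr hsd x).
  - right. destruct (knW r s' hr hs) as [s [s1 [s2 [s3 ->]]]]. exists s; split; [auto|split;[auto|split;[auto|]]].
    intros c hc. apply (I_XP E Hi c ub); auto. apply (body_lt D s c s1 hc). apply x; simpl; apply in_map; auto.
Qed.

Lemma S_oP a : atom_of a < MM -> T D'A E (Plus,d,a) -> DerD (Plus,TPartialStar,a).
Proof.
  intros ha h. destruct (orig_plus_out _ _ _ _ _ _ _ _ d sg Hd (oS a ha) h) as [x|x].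
  - apply B1, (I_oPD E Hi a ha x).
  - apply (I_XP E Hi a d); auto. left; auto.
Qed.

Lemma S_oM a : atom_of a < MM -> T D'A E (Minus,d,a) -> DerD (Minus,TPartialStar,a).
Proof.
  intros ha h.
  assert (hca : atom_of (compl a) < MM) by (rewrite atom_compl; auto).
  assert (C5 : forall s, in_R D'A (compl a) s -> rkindof s = Strict -> s <> mk D (Ip (compl a)) /\ s <> mk D (Ik a)).
  { intros s _ hk; split; intros ->; discriminate. }
  destruct (orig_minus_out _ _ _ _ _ _ _ _ d sg Hd (oS a ha) C5 h) as [h0 [x|[x|x]]].
  - apply (I_XM E Hi a d); auto. left; auto.
  - apply B3. apply (I_oMD E Hi a ha h0). intros; left; apply (I_oPD E Hi _ hca x).
  - apply B4. apply (I_oMD E Hi a ha h0). apply (I_XP E Hi (compl a) sg); auto. right; auto.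
Qed.
End Step.

Lemma Bwd n : forall c, iterT D'A n c -> Int c.
Proof.
  induction n as [|n IH]; intros c hc; [destruct hc|].
  pose proof hc as hc0. change (T D'A (iterT D'A n) c) in hc.
  split; [|split; [|split; [|split; [|split; [|split; [|split; [|split; [|split; [|split]]]]]]]]].
  - intros a ha. split; [|split; [|split]]; intros ->.
    + apply dtransB; auto. exists (S n); auto.
    + apply dtransB; auto. exists (S n); auto.
    + apply (S_oP _ IH a ha hc).
    + apply (S_oM _ IH a ha hc).
  - intros a u ha [->|hu]; split; intros ->.
    + apply (S_DlPD _ IH a ha hc).
    + apply (S_DlMD _ IH a ha hc).
    + apply (S_DlP _ IH a u ha hu hc).
    + apply (S_DlM _ IH a u ha hu hc).
  - intros a ha ->; apply (S_NPD _ a ha hc).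
  - intros a u ha hu; split; intros ->; [apply (S_NP _ IH a u ha hu hc)|apply (S_NM _ IH a u ha hu hc)].
  - intros a ha ->; apply (S_XPD _ a ha hc).
  - intros a u ha hu; split; intros ->; [apply (S_XP _ IH a u ha hu hc)|apply (S_XM _ IH a u ha hu hc)].
  - intros r h1 h2 ->; apply (S_WPD _ r h1 h2 hc).
  - intros r u h1 h2 hu; split; intros ->; [apply (S_WP _ IH r u h1 h2 hu hc)|apply (S_WM _ IH r u h1 h2 hu hc)].
  - intros a ha ->; apply (S_nN _ a ha hc).
  - intros a ha ->; apply (S_nX _ a ha hc).
  - intros r h1 h2 ->; apply (S_nW _ r h1 h2 hc).
Qed.

Lemma main_q q : in_Sigma DA q ->
  (DerD (Plus,TPartialStar,q) <-> Der' (Plus,d,q)) /\ (DerD (Minus,TPartialStar,q) <-> Der' (Minus,d,q)).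
Proof.
  intros hq. assert (dT : tg d) by (left; auto).
  destruct (classic (In q FA)) as [hf|hf].
  - assert (P1 : DerD (Plus,TDelta,q)) by (apply derives_T; cbn [T]; left; cbn [facts DA add fact_theory]; apply in_or_app; auto).
    assert (P2 : Der' (Plus,TDelta,q)) by (apply derives_T; cbn [T]; left; cbn [facts D'A add D' fact_theory]; apply in_or_app; auto).
    split; split; intros h.
    + apply derives_T, plus_from_delta; auto; apply tg_ndelta; auto.
    + apply B1; auto.
    + exfalso. apply derives_unfold in h; cbn [T] in h. destruct h as [h _].
      apply derives_unfold in h; cbn [T] in h. destruct h as [h _]. apply h; cbn [facts DA add fact_theory]; apply in_or_app; auto.
    + exfalso. apply derives_unfold in h. apply minus_to_delta in h; [|apply tg_ndelta; auto].
      apply derives_unfold in h; cbn [T] in h. destruct h as [h _]. apply h; cbn [facts D'A add D' fact_theory]; apply in_or_app; auto.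
  - assert (ha : atom_of q < MM).
    { apply sigma_lt. destruct hq as [h|[r [hr h]]].
      - cbn [facts DA add fact_theory] in h. apply in_app_or in h. destruct h as [h|h]; [left; auto|contradiction].
      - cbn [rules DA add fact_theory] in hr. rewrite app_nil_r in hr. right; eauto. }
    split; split; intros h.
    + destruct h as [n h]. apply (proj1 (Fwd n q ha) h).
    + destruct h as [n h]. destruct (Bwd n _ h) as [i1 _]. apply (i1 q ha); auto.
    + destruct h as [n h]. apply (proj2 (Fwd n q ha) h).
    + destruct h as [n h]. destruct (Bwd n _ h) as [i1 _]. apply (i1 q ha); auto.
Qed.
End G.

Definition sgof (d : tag) : tag := match d with TDelta_ => TSigma | TDeltaStar => TSigmaStar | _ => TPartial end.

Theorem theorem8 :
  forall d : tag, d = TDelta_ \/ d = TDeltaStar \/ d = TPartial ->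
  forall D : theory, wf_theory D ->
  exists D' : theory, wf_theory D' /\
    forall FA : list literal,
      modular D D' (fact_theory FA) ->
      forall q : literal, in_Sigma (add D (fact_theory FA)) q ->
        (derives (add D (fact_theory FA)) (Plus, TPartialStar, q) <->
         derives (add D' (fact_theory FA)) (Plus, d, q)) /\
        (derives (add D (fact_theory FA)) (Minus, TPartialStar, q) <->
         derives (add D' (fact_theory FA)) (Minus, d, q)).
Proof.
  intros d Hd D wfD. exists (D' D). split; [apply wf_D'; auto|].
  intros FA Hmod q hq.
  assert (Ht : tagok d (sgof d)) by (unfold tagok; destruct Hd as [->|[->| ->]]; simpl; auto).
  exact (main_q D wfD FA Hmod d (sgof d) Ht q hq).
Qed.
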